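(* Let $X$ be as in the context. Then $X$ is positive recurrent if either (a) $v(x)\gtrsim x^c$ for some constant $c\le 2$ and $\limsup_{x\to\infty}J(x)<c-1$, or (b) $v(x)\gtrsim x^c$ for some constant $c>2$ and $\limsup_{x\to\infty}H_1(x)<1$.
   Context: Let $\mathbb S\subseteq\mathbb Z_{\ge0}$ be an infinite set and let $X$ be an irreducible continuous-time Markov chain on $\mathbb S$ whose generator acts on functions $f:\mathbb S\to\mathbb R$ by $\mathcal A f(x)=\sum_{\eta\in\mathbb Z}\lambda_\eta(x)\big(f(x+\eta)-f(x)\big)$, where $\lambda_\eta(x)$ is the rate of the jump $x\to x+\eta$ (and $\lambda_\eta(x)=0$ whenever $x+\eta\notin\mathbb S$). Standing assumption: (a) there is a finite set $\Gamma\subset\mathbb Z$ such that $\lambda_\eta\equiv0$ for $\eta\notin\Gamma$; (b) $0\le\lambda_\eta(x)<\infty$ for all $x,\eta$. Define $m(x)=\sum_{\eta}\eta\,\lambda_\eta(x)$, $v(x)=\frac12\sum_\eta\eta^2\lambda_\eta(x)$ (positive on $\mathbb S$), $J(x)=\dfrac{m(x)x}{v(x)}$, and for $x>1$, $H_1(x)=\dfrac{(\log x)(m(x)x-v(x))}{v(x)}$. Notation: $g\gtrsim h$ means there is $C>0$ with $h(x)\le Cg(x)$ for all sufficiently large $x\in\mathbb S$. *)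

(* Defs.v *)
From Stdlib Require Import Reals ZArith List.
Import ListNotations.
Open Scope R_scope.

(* Rates: [lam eta x] is the rate of the jump x -> x + eta.
   Gam is a finite (duplicate-free) list containing every eta with a
   possibly nonzero rate, so sums over eta in Z reduce to sums over Gam. *)

Definition sumG (Gam : list Z) (f : Z -> R) : R :=
  fold_right Rplus 0 (map f Gam).

Definition drift (Gam : list Z) (lam : Z -> Z -> R) (x : Z) : R :=
  sumG Gam (fun eta => IZR eta * lam eta x).

Definition vdiff (Gam : list Z) (lam : Z -> Z -> R) (x : Z) : R :=
  / 2 * sumG Gam (fun eta => (IZR eta) ^ 2 * lam eta x).

Definition Jfun (Gam : list Z) (lam : Z -> Z -> R) (x : Z) : R :=
  drift Gam lam x * IZR x / vdiff Gam lam x.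

Definition H1fun (Gam : list Z) (lam : Z -> Z -> R) (x : Z) : R :=
  ln (IZR x) * (drift Gam lam x * IZR x - vdiff Gam lam x) / vdiff Gam lam x.

(* Genuine jumps: eta <> 0 (a jump of size 0 does not move the chain). *)
Definition realSteps (Gam : list Z) : list Z :=
  filter (fun e => negb (Z.eqb e 0)) Gam.

Definition qrate (Gam : list Z) (lam : Z -> Z -> R) (x : Z) : R :=
  sumG (realSteps Gam) (fun eta => lam eta x).

(* transition probability of the embedded jump chain: x -> x + eta *)
Definition jumpP (Gam : list Z) (lam : Z -> Z -> R) (x eta : Z) : R :=
  lam eta x / qrate Gam lam x.

Fixpoint stepSeqs (G : list Z) (n : nat) : list (list Z) :=
  match n with
  | O => [nil]
  | S n' => flat_map (fun e => map (cons e) (stepSeqs G n')) G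
  end.

Fixpoint visits (y : Z) (s : list Z) : list Z :=
  match s with
  | nil => [y]
  | e :: s' => y :: visits (y + e)%Z s'
  end.

Fixpoint pathProb (Gam : list Z) (lam : Z -> Z -> R) (y : Z) (s : list Z) : R :=
  match s with
  | nil => 1
  | e :: s' => jumpP Gam lam y e * pathProb Gam lam (y + e)%Z s'
  end.

(* expected total holding time along the path (sum of mean holding times
   1/q at the states left) *)
Fixpoint holdTime (Gam : list Z) (lam : Z -> Z -> R) (y : Z) (s : list Z) : R :=
  match s with
  | nil => 0
  | e :: s' => / qrate Gam lam y + holdTime Gam lam (y + e)%Z s'
  end.

Definition firstReturnb (x : Z) (s : list Z) : bool :=
  match s with
  | nil => false
  | _ :: _ =>
      let vs := visits x s in
      Z.eqb (last vs x) x &&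
      negb (existsb (fun y => Z.eqb y x) (removelast (tl vs)))
  end.

Definition firstRetProb (Gam : list Z) (lam : Z -> Z -> R) (x : Z) (n : nat) : R :=
  fold_right Rplus 0
    (map (fun s => if firstReturnb x s then pathProb Gam lam x s else 0)
         (stepSeqs (realSteps Gam) n)).

(* contribution of returns at jump number n to E_x[return time] *)
Definition firstRetTime (Gam : list Z) (lam : Z -> Z -> R) (x : Z) (n : nat) : R :=
  fold_right Rplus 0
    (map (fun s => if firstReturnb x s
                   then pathProb Gam lam x s * holdTime Gam lam x s else 0)
         (stepSeqs (realSteps Gam) n)).

(* Positive recurrence of the CTMC: every state x of S is returned to
   with probability 1, and the expected return time
   E_x[inf{t > J_1 : X_t = x}] is finite. *)
Definition positive_recurrent (S : Z -> Prop) (Gam : list Z)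
    (lam : Z -> Z -> R) : Prop :=
  forall x, S x ->
    infinite_sum (fun n => firstRetProb Gam lam x (Datatypes.S n)) 1 /\
    exists T, infinite_sum (fun n => firstRetTime Gam lam x (Datatypes.S n)) T.

Inductive reaches (S : Z -> Prop) (lam : Z -> Z -> R) : Z -> Z -> Prop :=
  | reaches_refl x : reaches S lam x x
  | reaches_step x eta y : S x -> eta <> 0%Z -> 0 < lam eta x ->
      reaches S lam (x + eta)%Z y -> reaches S lam x y.

Definition irreducible (S : Z -> Prop) (lam : Z -> Z -> R) : Prop :=
  forall x y, S x -> S y -> reaches S lam x y.

Definition gtrsim (S : Z -> Prop) (g h : Z -> R) : Prop :=
  exists C, 0 < C /\ exists N : Z, forall x, S x -> (N <= x)%Z -> h x <= C * g x.

Definition limsup_lt (S : Z -> Prop) (f : Z -> R) (a : R) : Prop :=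
  exists b, b < a /\ exists N : Z, forall x, S x -> (N <= x)%Z -> f x <= b.

(* Main.v *)
Require Import Defs.
From Stdlib Require Import Reals ZArith List Lra Lia FunctionalExtensionality Classical.
Import ListNotations.
Open Scope R_scope.

Lemma Rdiv_le_0_compat a b : 0 <= a -> 0 < b -> 0 <= a / b.
Proof. intros. unfold Rdiv. apply Rmult_le_pos; auto. left; apply Rinv_0_lt_compat; auto. Qed.
Lemma sumG_nil f : sumG [] f = 0. Proof. reflexivity. Qed.
Lemma sumG_cons a l f : sumG (a :: l) f = f a + sumG l f. Proof. reflexivity. Qed.

Lemma sumG_ext l f g : (forall e, In e l -> f e = g e) -> sumG l f = sumG l g.
Proof. induction l; intros H; rewrite ?sumG_nil, ?sumG_cons; auto.
 rewrite H by (left; auto). rewrite IHl; auto. intros; apply H; right; auto. Qed.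

Lemma sumG_le l f g : (forall e, In e l -> f e <= g e) -> sumG l f <= sumG l g.
Proof. induction l; intros H; rewrite ?sumG_nil, ?sumG_cons. lra.
 assert (f a <= g a) by (apply H; left; auto).
 assert (sumG l f <= sumG l g) by (apply IHl; intros; apply H; right; auto). lra. Qed.

Lemma sumG_plus l f g : sumG l (fun e => f e + g e) = sumG l f + sumG l g.
Proof. induction l; rewrite ?sumG_nil, ?sumG_cons; [lra|]. rewrite IHl; lra. Qed.

Lemma sumG_scal l c f : sumG l (fun e => c * f e) = c * sumG l f.
Proof. induction l; rewrite ?sumG_nil, ?sumG_cons; [lra|]. rewrite IHl; lra. Qed.

Lemma sumG_zero l : sumG l (fun _ => 0) = 0.
Proof. induction l; rewrite ?sumG_nil, ?sumG_cons; [lra|]. rewrite IHl; lra. Qed.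

Lemma sumG_nonneg l f : (forall e, In e l -> 0 <= f e) -> 0 <= sumG l f.
Proof. intros H. rewrite <- (sumG_zero l). apply sumG_le. auto. Qed.

Lemma sumG_ge_term l f a : NoDup l -> (forall e, In e l -> 0 <= f e) -> In a l -> f a <= sumG l f.
Proof. induction l; intros Hnd H Ha; [destruct Ha|]. rewrite sumG_cons.
 inversion Hnd; subst. destruct Ha as [<-|Ha].
 - assert (0 <= sumG l f) by (apply sumG_nonneg; intros; apply H; right; auto). lra.
 - assert (0 <= f a0) by (apply H; left; auto).
   assert (f a <= sumG l f) by (apply IHl; auto; intros; apply H; right; auto). lra. Qed.

Lemma sumG_filter (p : Z -> bool) l f : sumG (filter p l) f = sumG l (fun e => if p e then f e else 0).
Proof. induction l; simpl; auto. destruct (p a) eqn:E; rewrite !sumG_cons, E, <- IHl; auto; lra. Qed.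

Lemma sumG_cv l (a : nat -> Z -> R) b :
  (forall e, In e l -> Un_cv (fun n => a n e) (b e)) -> Un_cv (fun n => sumG l (a n)) (sumG l b).
Proof. induction l; intros H.
 - rewrite sumG_nil. intros eps Heps. exists 0%nat. intros. rewrite sumG_nil. unfold Rdist. rewrite Rminus_diag, Rabs_R0; lra.
 - rewrite sumG_cons. apply (CV_plus (fun n => a n a0) (fun n => sumG l (a n))).
   apply H; left; auto. apply IHl; intros; apply H; right; auto. Qed.

Lemma sumG_sum l (a : nat -> Z -> R) N :
  sumG l (fun e => sum_f_R0 (fun n => a n e) N) = sum_f_R0 (fun n => sumG l (a n)) N.
Proof. induction N; simpl; auto. rewrite sumG_plus, IHN. auto. Qed.

Lemma sumG_In_bound l f : (forall e, In e l -> 0 <= f e) -> forall a, In a l -> f a <= sumG l f.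
Proof. induction l; intros H b Hb; [destruct Hb|]. rewrite sumG_cons. destruct Hb as [<-|Hb].
 - assert (0 <= sumG l f) by (apply sumG_nonneg; intros; apply H; right; auto). lra.
 - assert (0 <= f a) by (apply H; left; auto).
   assert (f b <= sumG l f) by (apply IHl; auto; intros; apply H; right; auto). lra. Qed.

Record hyps (S : Z -> Prop) (lam : Z -> Z -> R) (Gam : list Z) : Prop := {
  h_nn : forall x, S x -> (0 <= x)%Z;
  h_nd : NoDup Gam;
  h_G : forall eta x, S x -> ~ In eta Gam -> lam eta x = 0;
  h_l : forall eta x, S x -> 0 <= lam eta x;
  h_o : forall eta x, S x -> ~ S (x + eta)%Z -> lam eta x = 0;
  h_v : forall x, S x -> 0 < vdiff Gam lam x;
  h_irr : irreducible S lam }.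

Definition Pop Gam lam (g : Z -> R) (y : Z) : R :=
  sumG (realSteps Gam) (fun e => jumpP Gam lam y e * g (y + e)%Z).
Definition Top Gam lam (F : Z -> bool) (g : Z -> R) (y : Z) : R :=
  if F y then 0 else Pop Gam lam g y.
Fixpoint Tpow Gam lam F n g : Z -> R :=
  match n with O => g | S n => Top Gam lam F (Tpow Gam lam F n g) end.
Fixpoint Ug Gam lam F n g : Z -> R :=
  match n with O => fun _ => 0 | S n => fun y => g y + Top Gam lam F (Ug Gam lam F n g) y end.

Lemma realSteps_In Gam e : In e (realSteps Gam) <-> In e Gam /\ e <> 0%Z.
Proof. unfold realSteps. rewrite filter_In. destruct (Z.eqb_spec e 0); simpl; intuition. Qed.

Lemma realSteps_nodup Gam : NoDup Gam -> NoDup (realSteps Gam).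
Proof. intros; apply NoDup_filter; auto. Qed.

Lemma sumG_realSteps Gam f : f 0%Z = 0 -> sumG (realSteps Gam) f = sumG Gam f.
Proof. intros H0. unfold realSteps. rewrite sumG_filter. apply sumG_ext. intros e _.
 destruct (Z.eqb_spec e 0); simpl; subst; auto. Qed.
Section dummy. End dummy.
Lemma q_pos St lam Gam (H : hyps St lam Gam) y : St y -> 0 < qrate Gam lam y.
Proof. intros Sy. unfold qrate.
 destruct (classic (exists e, In e (realSteps Gam) /\ 0 < lam e y)) as [[e [He Hl]]|Hn].
 - eapply Rlt_le_trans; [exact Hl|]. apply (sumG_ge_term _ (fun e => lam e y)).
   apply realSteps_nodup, (h_nd _ _ _ H). intros; apply (h_l _ _ _ H); auto. auto.
 - exfalso. pose proof (h_v _ _ _ H y Sy) as Hv. unfold vdiff in Hv.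
   rewrite (sumG_ext _ _ (fun _ => 0)) in Hv. rewrite sumG_zero in Hv. lra.
   intros e He. destruct (Z.eq_dec e 0) as [->|Hne]. simpl; ring.
   assert (lam e y = 0). { pose proof (h_l _ _ _ H e y Sy).
     destruct (Rle_lt_or_eq_dec _ _ H0) as [Hlt|]; auto. exfalso; apply Hn; exists e; split; auto.
     apply realSteps_In; auto. }
   rewrite H0; ring. Qed.

Lemma jumpP_nonneg St lam Gam (H : hyps St lam Gam) y e : St y -> 0 <= jumpP Gam lam y e.
Proof. intros Sy. unfold jumpP. pose proof (q_pos _ _ _ H y Sy). pose proof (h_l _ _ _ H e y Sy).
 apply Rmult_le_pos; auto. left; apply Rinv_0_lt_compat; auto. Qed.

Lemma jumpP_out St lam Gam (H : hyps St lam Gam) y e : St y -> ~ St (y + e)%Z -> jumpP Gam lam y e = 0.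
Proof. intros Sy Hn. unfold jumpP. rewrite (h_o _ _ _ H e y Sy Hn). unfold Rdiv; ring. Qed.

Lemma P_one St lam Gam (H : hyps St lam Gam) y : St y -> Pop Gam lam (fun _ => 1) y = 1.
Proof. intros Sy. unfold Pop, jumpP. pose proof (q_pos _ _ _ H y Sy).
 rewrite (sumG_ext _ _ (fun e => / qrate Gam lam y * lam e y)).
 rewrite sumG_scal. change (sumG (realSteps Gam) (fun e => lam e y)) with (qrate Gam lam y). field. lra. intros; unfold Rdiv; ring. Qed.

Lemma P_mono St lam Gam (H : hyps St lam Gam) g1 g2 y : St y -> (forall z, St z -> g1 z <= g2 z) ->
  Pop Gam lam g1 y <= Pop Gam lam g2 y.
Proof. intros Sy Hg. unfold Pop. apply sumG_le. intros e _.
 destruct (classic (St (y + e)%Z)) as [Hs|Hs].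
 - apply Rmult_le_compat_l; auto. apply (jumpP_nonneg _ _ _ H); auto.
 - rewrite (jumpP_out _ _ _ H y e Sy Hs). lra. Qed.

Lemma P_ext St lam Gam (H : hyps St lam Gam) g1 g2 y : St y -> (forall z, St z -> g1 z = g2 z) ->
  Pop Gam lam g1 y = Pop Gam lam g2 y.
Proof. intros Sy Hg. apply Rle_antisym; apply (P_mono _ _ _ H); auto; intros; rewrite Hg; auto; lra. Qed.

Lemma P_plus Gam lam g1 g2 y : Pop Gam lam (fun z => g1 z + g2 z) y = Pop Gam lam g1 y + Pop Gam lam g2 y.
Proof. unfold Pop. rewrite <- sumG_plus. apply sumG_ext; intros; ring. Qed.

Lemma P_scal Gam lam c g y : Pop Gam lam (fun z => c * g z) y = c * Pop Gam lam g y.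
Proof. unfold Pop. rewrite <- sumG_scal. apply sumG_ext; intros; ring. Qed.

Lemma P_zero Gam lam y : Pop Gam lam (fun _ => 0) y = 0.
Proof. unfold Pop. transitivity (sumG (realSteps Gam) (fun _ => 0)); [apply sumG_ext; intros; ring|apply sumG_zero]. Qed.

Lemma P_const St lam Gam (H : hyps St lam Gam) c y : St y -> Pop Gam lam (fun _ => c) y = c.
Proof. intros Sy. rewrite (P_ext _ _ _ H _ (fun z => c * 1)); [|assumption|intros; ring].
 rewrite P_scal, (P_one _ _ _ H); auto; ring. Qed.

Lemma P_nonneg St lam Gam (H : hyps St lam Gam) g y : St y -> (forall z, St z -> 0 <= g z) -> 0 <= Pop Gam lam g y.
Proof. intros Sy Hg. eapply Rle_trans; [right; symmetry; apply (P_zero Gam lam y)|]. apply (P_mono _ _ _ H); auto. Qed.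

Lemma P_ge_term St lam Gam (H : hyps St lam Gam) g y e : St y -> (forall z, St z -> 0 <= g z) ->
  In e Gam -> e <> 0%Z -> jumpP Gam lam y e * g (y + e)%Z <= Pop Gam lam g y.
Proof. intros Sy Hg He Hne. unfold Pop.
 apply (sumG_ge_term _ (fun e => jumpP Gam lam y e * g (y + e)%Z)).
 apply realSteps_nodup, (h_nd _ _ _ H).
 intros e' _. destruct (classic (St (y + e')%Z)) as [Hs|Hs].
 - apply Rmult_le_pos; auto. apply (jumpP_nonneg _ _ _ H); auto.
 - rewrite (jumpP_out _ _ _ H y e' Sy Hs). lra.
 - apply realSteps_In; auto. Qed.

Lemma P_sum Gam lam (a : nat -> Z -> R) N y :
  Pop Gam lam (fun z => sum_f_R0 (fun n => a n z) N) y = sum_f_R0 (fun n => Pop Gam lam (a n) y) N.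
Proof. induction N; simpl; auto. rewrite P_plus, IHN; auto. Qed.

Lemma T_mono St lam Gam (H : hyps St lam Gam) F g1 g2 y : St y -> (forall z, St z -> g1 z <= g2 z) ->
  Top Gam lam F g1 y <= Top Gam lam F g2 y.
Proof. intros. unfold Top. destruct (F y). lra. apply (P_mono _ _ _ H); auto. Qed.
Lemma T_ext St lam Gam (H : hyps St lam Gam) F g1 g2 y : St y -> (forall z, St z -> g1 z = g2 z) ->
  Top Gam lam F g1 y = Top Gam lam F g2 y.
Proof. intros. unfold Top. destruct (F y). lra. apply (P_ext _ _ _ H); auto. Qed.
Lemma T_plus Gam lam F g1 g2 y : Top Gam lam F (fun z => g1 z + g2 z) y = Top Gam lam F g1 y + Top Gam lam F g2 y.
Proof. unfold Top. destruct (F y). lra. apply P_plus. Qed.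
Lemma T_scal Gam lam F c g y : Top Gam lam F (fun z => c * g z) y = c * Top Gam lam F g y.
Proof. unfold Top. destruct (F y). lra. apply P_scal. Qed.
Lemma T_zero Gam lam F y : Top Gam lam F (fun _ => 0) y = 0.
Proof. unfold Top. destruct (F y). lra. apply P_zero. Qed.
Lemma T_nonneg St lam Gam (H : hyps St lam Gam) F g y : St y -> (forall z, St z -> 0 <= g z) -> 0 <= Top Gam lam F g y.
Proof. intros. unfold Top. destruct (F y). lra. apply (P_nonneg _ _ _ H); auto. Qed.
Lemma T_sum Gam lam F (a : nat -> Z -> R) N y :
  Top Gam lam F (fun z => sum_f_R0 (fun n => a n z) N) y = sum_f_R0 (fun n => Top Gam lam F (a n) y) N.
Proof. induction N; simpl; auto. rewrite T_plus, IHN; auto. Qed.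
Lemma T_one_le St lam Gam (H : hyps St lam Gam) F y : St y -> Top Gam lam F (fun _ => 1) y <= 1.
Proof. intros. unfold Top. destruct (F y). lra. rewrite (P_one _ _ _ H); auto; lra. Qed.
Definition hf Gam lam : Z -> R := fun y => / qrate Gam lam y.
Definition ind (F : Z -> bool) : Z -> R := fun z => if F z then 1 else 0.

Lemma hf_pos St lam Gam (H : hyps St lam Gam) y : St y -> 0 < hf Gam lam y.
Proof. intros; unfold hf; apply Rinv_0_lt_compat, (q_pos _ _ _ H); auto. Qed.

Lemma Ug_nonneg St lam Gam (H : hyps St lam Gam) F g N y : St y -> (forall z, St z -> 0 <= g z) ->
  0 <= Ug Gam lam F N g y.
Proof. revert y; induction N; intros y Sy Hg; simpl. lra.
 pose proof (Hg y Sy). pose proof (T_nonneg _ _ _ H F (Ug Gam lam F N g) y Sy (fun z Sz => IHN z Sz Hg)). lra. Qed.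

Lemma Ug_mono_g St lam Gam (H : hyps St lam Gam) F g1 g2 N y : St y -> (forall z, St z -> g1 z <= g2 z) ->
  Ug Gam lam F N g1 y <= Ug Gam lam F N g2 y.
Proof. revert y; induction N; intros y Sy Hg; simpl. lra.
 pose proof (Hg y Sy). pose proof (T_mono _ _ _ H F _ _ y Sy (fun z Sz => IHN z Sz Hg)). lra. Qed.

Lemma Ug_mono_N St lam Gam (H : hyps St lam Gam) F g N y : St y -> (forall z, St z -> 0 <= g z) ->
  Ug Gam lam F N g y <= Ug Gam lam F (S N) g y.
Proof. revert y; induction N; intros y Sy Hg.
 - simpl. pose proof (Hg y Sy). rewrite T_zero. lra.
 - change (g y + Top Gam lam F (Ug Gam lam F N g) y <= g y + Top Gam lam F (Ug Gam lam F (S N) g) y).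
   pose proof (T_mono _ _ _ H F _ _ y Sy (fun z Sz => IHN z Sz Hg)). lra. Qed.

Lemma Ug_mono_le St lam Gam (H : hyps St lam Gam) F g N M y : St y -> (forall z, St z -> 0 <= g z) ->
  (N <= M)%nat -> Ug Gam lam F N g y <= Ug Gam lam F M g y.
Proof. intros Sy Hg Hle. induction Hle. lra. eapply Rle_trans; [exact IHHle|]. apply (Ug_mono_N _ _ _ H); auto. Qed.

Lemma Ug_plus Gam lam F g1 g2 N y :
  Ug Gam lam F N (fun z => g1 z + g2 z) y = Ug Gam lam F N g1 y + Ug Gam lam F N g2 y.
Proof. revert y; induction N; intros y; simpl. lra.
 rewrite (functional_extensionality _ _ IHN), T_plus. lra. Qed.

Lemma Ug_scal Gam lam F c g N y : Ug Gam lam F N (fun z => c * g z) y = c * Ug Gam lam F N g y.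
Proof. revert y; induction N; intros y; simpl. lra.
 rewrite (functional_extensionality _ _ IHN), T_scal. lra. Qed.

Lemma Ug_split Gam lam F g N y : Ug Gam lam F (S N) g y = Ug Gam lam F N g y + Tpow Gam lam F N g y.
Proof. revert y; induction N; intros y. simpl. rewrite T_zero; lra.
 change (g y + Top Gam lam F (Ug Gam lam F (S N) g) y = g y + Top Gam lam F (Ug Gam lam F N g) y + Top Gam lam F (Tpow Gam lam F N g) y).
 rewrite (functional_extensionality _ _ IHN), T_plus. lra. Qed.

Lemma Ug_hit St lam Gam (H : hyps St lam Gam) F N y : St y -> Ug Gam lam F N (ind F) y <= 1.
Proof. revert y; induction N; intros y Sy. simpl; lra.
 change (ind F y + Top Gam lam F (Ug Gam lam F N (ind F)) y <= 1).
 unfold Top, ind at 1. destruct (F y) eqn:E. lra.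
 assert (Pop Gam lam (Ug Gam lam F N (ind F)) y <= 1).
 { rewrite <- (P_one _ _ _ H y Sy). apply (P_mono _ _ _ H); auto. }
 lra. Qed.

Lemma Tpow_nonneg St lam Gam (H : hyps St lam Gam) F g N y : St y -> (forall z, St z -> 0 <= g z) ->
  0 <= Tpow Gam lam F N g y.
Proof. revert y; induction N; intros y Sy Hg; simpl; auto. apply (T_nonneg _ _ _ H); auto. Qed.
Lemma Tpow_mono St lam Gam (H : hyps St lam Gam) F g1 g2 N y : St y -> (forall z, St z -> g1 z <= g2 z) ->
  Tpow Gam lam F N g1 y <= Tpow Gam lam F N g2 y.
Proof. revert y; induction N; intros y Sy Hg; simpl; auto. apply (T_mono _ _ _ H); auto. Qed.
Lemma Tpow_plus Gam lam F g1 g2 N y :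
  Tpow Gam lam F N (fun z => g1 z + g2 z) y = Tpow Gam lam F N g1 y + Tpow Gam lam F N g2 y.
Proof. revert y; induction N; intros y; simpl; auto. rewrite (functional_extensionality _ _ IHN), T_plus; auto. Qed.
Lemma Tpow_scal Gam lam F c g N y : Tpow Gam lam F N (fun z => c * g z) y = c * Tpow Gam lam F N g y.
Proof. revert y; induction N; intros y; simpl; auto. rewrite (functional_extensionality _ _ IHN), T_scal; auto. Qed.
Lemma Tpow_one_le St lam Gam (H : hyps St lam Gam) F N y : St y -> Tpow Gam lam F (S N) (fun _ => 1) y <= Tpow Gam lam F N (fun _ => 1) y.
Proof. revert y; induction N; intros y Sy. simpl. apply (T_one_le _ _ _ H); auto.
 change (Top Gam lam F (Tpow Gam lam F (S N) (fun _ => 1)) y <= Top Gam lam F (Tpow Gam lam F N (fun _ => 1)) y).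
 apply (T_mono _ _ _ H); auto. Qed.
Lemma Tpow_one_le_n St lam Gam (H : hyps St lam Gam) F N M y : St y -> (N <= M)%nat ->
  Tpow Gam lam F M (fun _ => 1) y <= Tpow Gam lam F N (fun _ => 1) y.
Proof. intros Sy Hle; induction Hle. lra. eapply Rle_trans; [|exact IHHle]. apply (Tpow_one_le _ _ _ H); auto. Qed.

Lemma fin_max (f : Z -> R) (n : nat) : exists M, 0 <= M /\ forall y, (0 <= y < Z.of_nat n)%Z -> f y <= M.
Proof. induction n. exists 0; split; [lra|]; intros; lia.
 destruct IHn as [M [HM HH]]. exists (Rmax M (f (Z.of_nat n))). split. eapply Rle_trans; [exact HM|apply Rmax_l].
 intros y Hy. destruct (Z.eq_dec y (Z.of_nat n)) as [->|Hne]. apply Rmax_r.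
 eapply Rle_trans; [apply HH; lia|apply Rmax_l]. Qed.

Lemma list_bound (l : list Z) (a : nat -> Z -> R) : (forall e, In e l -> exists C, forall N, a N e <= C) ->
  exists C, forall N, sumG l (a N) <= C.
Proof. induction l; intros H. exists 0; intros; rewrite sumG_nil; lra.
 destruct (H a0 (or_introl eq_refl)) as [C1 H1]. destruct IHl as [C2 H2]. intros; apply H; right; auto.
 exists (C1 + C2). intros N. rewrite sumG_cons. pose proof (H1 N); pose proof (H2 N); lra. Qed.

Lemma P_bound St lam Gam (H : hyps St lam Gam) (a : nat -> Z -> R) y : St y ->
  (forall z, St z -> exists C, forall N, a N z <= C) -> exists C, forall N, Pop Gam lam (a N) y <= C.
Proof. intros Sy Ha. unfold Pop. apply (list_bound _ (fun N e => jumpP Gam lam y e * a N (y + e)%Z)).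
 intros e _. destruct (classic (St (y + e)%Z)) as [Hs|Hs].
 - destruct (Ha _ Hs) as [C HC]. exists (jumpP Gam lam y e * C). intros N.
   apply Rmult_le_compat_l; auto. apply (jumpP_nonneg _ _ _ H); auto.
 - exists 0. intros; rewrite (jumpP_out _ _ _ H y e Sy Hs); lra. Qed.
Lemma P_affine St lam Gam (H : hyps St lam Gam) a c V y : St y ->
  Pop Gam lam (fun z => a * V z + c) y = a * Pop Gam lam V y + c.
Proof. intros Sy. rewrite P_plus, P_scal, (P_const _ _ _ H); auto. Qed.

Lemma foster_base St lam Gam (H : hyps St lam Gam) F V eps Hm : 0 < eps -> 0 <= Hm ->
  (forall z, St z -> 0 <= V z) ->
  (forall y, St y -> F y = false -> Pop Gam lam V y <= V y - eps * hf Gam lam y) ->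
  (forall y, St y -> F y = true -> hf Gam lam y <= Hm) ->
  forall N y, St y -> Ug Gam lam F N (hf Gam lam) y <= V y / eps + Hm.
Proof. intros He Hm0 HV Hd Hb N. induction N; intros y Sy.
 - simpl. pose proof (HV y Sy). assert (0 <= V y / eps) by (apply Rdiv_le_0_compat; lra). lra.
 - change (hf Gam lam y + Top Gam lam F (Ug Gam lam F N (hf Gam lam)) y <= V y / eps + Hm).
   unfold Top. destruct (F y) eqn:E.
   + pose proof (Hb y Sy E). pose proof (HV y Sy). assert (0 <= V y / eps) by (apply Rdiv_le_0_compat; lra). lra.
   + assert (Pop Gam lam (Ug Gam lam F N (hf Gam lam)) y <= Pop Gam lam (fun z => / eps * V z + Hm) y).
     { apply (P_mono _ _ _ H); auto. intros; unfold Rdiv in *; rewrite Rmult_comm; auto. }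
     rewrite (P_affine _ _ _ H) in H0; auto. pose proof (Hd y Sy E).
     assert (/ eps * Pop Gam lam V y <= / eps * (V y - eps * hf Gam lam y)).
     { apply Rmult_le_compat_l; auto. left; apply Rinv_0_lt_compat; auto. }
     replace (/ eps * (V y - eps * hf Gam lam y)) with (V y / eps - hf Gam lam y) in H2 by (field; lra).
     lra. Qed.

Lemma jumpP_pos St lam Gam (H : hyps St lam Gam) y e : St y -> 0 < lam e y -> 0 < jumpP Gam lam y e.
Proof. intros Sy Hl. unfold jumpP. apply Rdiv_lt_0_compat; auto. apply (q_pos _ _ _ H); auto. Qed.

Lemma step_facts St lam Gam (H : hyps St lam Gam) y e : St y -> 0 < lam e y -> St (y + e)%Z /\ In e Gam.
Proof. intros Sy Hl. split.
 - destruct (classic (St (y + e)%Z)); auto. rewrite (h_o _ _ _ H e y Sy H0) in Hl; lra.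
 - destruct (classic (In e Gam)); auto. rewrite (h_G _ _ _ H e y Sy H0) in Hl; lra. Qed.

Definition FFz (F' : Z -> bool) (z : Z) : Z -> bool := fun y => orb (F' y) (Z.eqb y z).

Lemma escape St lam Gam (H : hyps St lam Gam) F' z x : St z -> F' z = false -> F' x = true ->
  forall w t, reaches St lam w t -> t = x -> St w ->
  (exists N, 0 < Ug Gam lam (FFz F' z) N (ind F') w) \/
  (exists N, 0 < Pop Gam lam (Ug Gam lam (FFz F' z) N (ind F')) z).
Proof. intros Sz Fz Fx w t Hr. induction Hr; intros Ht Sw; subst.
 - left. exists 1%nat. simpl. rewrite T_zero. unfold ind; rewrite Fx; lra.
 - destruct (step_facts _ _ _ H x0 eta Sw H2) as [Sn Hin].
   destruct (IHHr eq_refl Sn) as [[N HN]|HP]; [|right; auto].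
   assert (Hj := jumpP_pos _ _ _ H x0 eta Sw H2).
   assert (Hnn : forall z0, St z0 -> 0 <= Ug Gam lam (FFz F' z) N (ind F') z0).
   { intros; apply (Ug_nonneg _ _ _ H); auto. intros; unfold ind; destruct (F' z1); lra. }
   assert (Hge := P_ge_term _ _ _ H _ x0 eta Sw Hnn Hin H1).
   destruct (F' x0) eqn:E.
   + left. exists 1%nat. simpl. rewrite T_zero. unfold ind; rewrite E; lra.
   + destruct (Z.eq_dec x0 z) as [->|Hne].
     * right. exists N. pose proof (Rmult_lt_0_compat _ _ Hj HN). lra.
     * left. exists (S N). change (0 < ind F' x0 + Top Gam lam (FFz F' z) (Ug Gam lam (FFz F' z) N (ind F')) x0).
       assert (HF : FFz F' z x0 = false) by (unfold FFz; rewrite E; destruct (Z.eqb_spec x0 z); [contradiction|reflexivity]).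
       unfold Top; rewrite HF. unfold ind at 1; rewrite E.
       pose proof (Rmult_lt_0_compat _ _ Hj HN). lra. Qed.
Lemma ind_nonneg F y : 0 <= ind F y.
Proof. unfold ind; destruct (F y); lra. Qed.

Lemma reduce St lam Gam (H : hyps St lam Gam) F' z x : St z -> F' z = false -> F' x = true -> St x ->
  (forall y, St y -> exists C, forall N, Ug Gam lam (FFz F' z) N (hf Gam lam) y <= C) ->
  forall y, St y -> exists C, forall N, Ug Gam lam F' N (hf Gam lam) y <= C.
Proof. intros Sz Fz Fx Sx Hyp.
 set (FF := FFz F' z). set (iz := ind (fun w => Z.eqb w z)).
 set (A := fun N => Ug Gam lam FF N iz).
 set (B := fun N => Pop Gam lam (Ug Gam lam F' N (hf Gam lam)) z).
 assert (Hhf : forall w, St w -> 0 <= hf Gam lam w) by (intros; left; apply (hf_pos _ _ _ H); auto).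
 assert (Hsplit : forall w, ind FF w = iz w + ind F' w).
 { intros w. unfold iz, FF, FFz, ind. destruct (Z.eqb_spec w z); subst; [rewrite Fz; simpl; lra|].
   destruct (F' w); simpl; lra. }
 assert (HA0 : forall N w, St w -> 0 <= A N w) by (intros; apply (Ug_nonneg _ _ _ H); auto; intros; apply ind_nonneg).
 assert (HA1 : forall N w, St w -> A N w <= 1).
 { intros N w Sw. eapply Rle_trans; [|apply (Ug_hit _ _ _ H FF N w Sw)].
   apply (Ug_mono_g _ _ _ H); auto. intros; rewrite Hsplit; pose proof (ind_nonneg F' z0); lra. }
 destruct (escape _ _ _ H F' z x Sz Fz Fx z x (h_irr _ _ _ H z x Sz Sx) eq_refl Sz) as [[N HN]|[N1 HN1]].
 { exfalso. destruct N; simpl in HN. lra. unfold Top, FFz, ind in HN. rewrite Fz, Z.eqb_refl in HN. simpl in HN. lra. }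
 set (delta := Pop Gam lam (Ug Gam lam FF N1 (ind F')) z).
 assert (Hd : 0 < delta) by exact HN1.
 assert (Hrho : forall N, Pop Gam lam (A N) z <= 1 - delta).
 { intros N. set (M := Nat.max N N1).
   assert (Pop Gam lam (A N) z <= Pop Gam lam (A M) z).
   { apply (P_mono _ _ _ H); auto. intros; apply (Ug_mono_le _ _ _ H); auto. intros; apply ind_nonneg. lia. }
   assert (delta <= Pop Gam lam (Ug Gam lam FF M (ind F')) z).
   { apply (P_mono _ _ _ H); auto. intros; apply (Ug_mono_le _ _ _ H); auto. intros; apply ind_nonneg. lia. }
   assert (Pop Gam lam (Ug Gam lam FF M (ind FF)) z <= 1).
   { rewrite <- (P_one _ _ _ H z Sz). apply (P_mono _ _ _ H); auto. intros; apply (Ug_hit _ _ _ H); auto. }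
   assert (Pop Gam lam (Ug Gam lam FF M (ind FF)) z = Pop Gam lam (A M) z + Pop Gam lam (Ug Gam lam FF M (ind F')) z).
   { rewrite <- P_plus. f_equal. apply functional_extensionality; intros w.
     unfold A. rewrite <- Ug_plus. f_equal. apply functional_extensionality; intros; apply Hsplit. }
   lra. }
 destruct (P_bound _ _ _ H (fun N => Ug Gam lam FF N (hf Gam lam)) z Sz Hyp) as [Cz HCz].
 assert (HB0 : forall N, 0 <= B N).
 { intros; apply (P_nonneg _ _ _ H); auto; intros; apply (Ug_nonneg _ _ _ H); auto. }
 assert (HBm : forall N, B N <= B (S N)).
 { intros; apply (P_mono _ _ _ H); auto; intros; apply (Ug_mono_N _ _ _ H); auto. }
 assert (Hmain : forall N w, St w -> Ug Gam lam F' N (hf Gam lam) w <= Ug Gam lam FF N (hf Gam lam) w + A N w * B N).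
 { intros N. induction N; intros w Sw. unfold A; simpl; lra.
   change (hf Gam lam w + Top Gam lam F' (Ug Gam lam F' N (hf Gam lam)) w <=
     hf Gam lam w + Top Gam lam FF (Ug Gam lam FF N (hf Gam lam)) w + (iz w + Top Gam lam FF (A N) w) * B (S N)).
   unfold Top. destruct (F' w) eqn:Ew.
   - assert (FF w = true) by (unfold FF, FFz; rewrite Ew; reflexivity). rewrite H0.
     pose proof (ind_nonneg (fun w => Z.eqb w z) w). pose proof (HB0 (S N)).
     fold iz in H1. pose proof (Rmult_le_pos _ _ H1 H2). lra.
   - destruct (Z.eq_dec w z) as [->|Hne].
     + assert (FF z = true) by (unfold FF, FFz; rewrite Z.eqb_refl, Bool.orb_true_r; reflexivity). rewrite H0.
       assert (iz z = 1) by (unfold iz, ind; rewrite Z.eqb_refl; reflexivity). rewrite H1.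
       pose proof (HBm N). unfold B at 1 in H2. lra.
     + assert (FF w = false) by (unfold FF, FFz; rewrite Ew; destruct (Z.eqb_spec w z); [contradiction|reflexivity]).
       rewrite H0. assert (iz w = 0) by (unfold iz, ind; destruct (Z.eqb_spec w z); [contradiction|reflexivity]).
       rewrite H1.
       assert (Pop Gam lam (Ug Gam lam F' N (hf Gam lam)) w <= Pop Gam lam (fun u => Ug Gam lam FF N (hf Gam lam) u + B N * A N u) w).
       { apply (P_mono _ _ _ H); auto. intros; rewrite (Rmult_comm (B N)); auto. }
       rewrite P_plus, P_scal in H2.
       assert (0 <= Pop Gam lam (A N) w) by (apply (P_nonneg _ _ _ H); auto).
       pose proof (HBm N). pose proof (Rmult_le_compat_l _ _ _ H3 H4). lra. }
 assert (HdB : forall N, delta * B N <= Cz).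
 { intros N. assert (B N <= Pop Gam lam (fun u => Ug Gam lam FF N (hf Gam lam) u + B N * A N u) z).
   { apply (P_mono _ _ _ H); auto. intros; rewrite (Rmult_comm (B N)); apply Hmain; auto. }
   rewrite P_plus, P_scal in H0. pose proof (HCz N). pose proof (Hrho N).
   pose proof (Rmult_le_compat_l _ _ _ (HB0 N) H2). simpl in H1. lra. }
 intros y Sy. destruct (Hyp y Sy) as [Cy HCy]. exists (Cy + Cz / delta). intros N.
 pose proof (Hmain N y Sy). pose proof (HCy N).
 assert (A N y * B N <= B N).
 { pose proof (HA0 N y Sy); pose proof (HA1 N y Sy); pose proof (HB0 N).
   rewrite <- (Rmult_1_l (B N)) at 2. apply Rmult_le_compat_r; auto. }
 assert (B N <= Cz / delta).
 { apply (Rmult_le_reg_l delta). exact Hd. rewrite (Rmult_comm delta (Cz / delta)).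
   replace (Cz / delta * delta) with Cz by (field; lra). apply HdB. }
 unfold FF in H0. lra. Qed.
Definition Fk (x : Z) (k : nat) : Z -> bool :=
  fun y => orb (Z.eqb y x) (andb (Z.leb 0 y) (Z.ltb y (Z.of_nat k))).

Lemma Ug_extF St lam Gam (H : hyps St lam Gam) F1 F2 g N y : St y -> (forall w, St w -> F1 w = F2 w) ->
  Ug Gam lam F1 N g y = Ug Gam lam F2 N g y.
Proof. revert y; induction N; intros y Sy HF; simpl; auto. unfold Top. rewrite HF by auto.
 destruct (F2 y); auto. f_equal. apply (P_ext _ _ _ H); auto. Qed.

Lemma Fk_S x k w : Fk x (S k) w = orb (Fk x k w) (Z.eqb w (Z.of_nat k)).
Proof. unfold Fk. rewrite Nat2Z.inj_succ.
 destruct (Z.eqb_spec w x), (Z.leb_spec 0 w), (Z.ltb_spec w (Z.of_nat k)), (Z.ltb_spec w (Z.succ (Z.of_nat k))),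
   (Z.eqb_spec w (Z.of_nat k)); simpl; auto; lia. Qed.

Lemma reduce_all St lam Gam (H : hyps St lam Gam) x : St x -> forall k,
  (forall y, St y -> exists C, forall N, Ug Gam lam (Fk x k) N (hf Gam lam) y <= C) ->
  forall y, St y -> exists C, forall N, Ug Gam lam (fun w => Z.eqb w x) N (hf Gam lam) y <= C.
Proof. intros Sx k. induction k; intros Hk.
 - intros y Sy. destruct (Hk y Sy) as [C HC]. exists C. intros N.
   rewrite (Ug_extF _ _ _ H _ (Fk x 0)); auto. intros w _. unfold Fk.
   destruct (Z.eqb w x); simpl; auto. destruct (Z.leb_spec 0 w), (Z.ltb_spec w 0); simpl; auto; lia.
 - apply IHk. set (z := Z.of_nat k).
   assert (Hext : forall F, (forall w, St w -> Fk x (S k) w = F w) ->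
     forall y, St y -> exists C, forall N, Ug Gam lam F N (hf Gam lam) y <= C).
   { intros F HF y Sy. destruct (Hk y Sy) as [C HC]. exists C. intros N.
     rewrite <- (Ug_extF _ _ _ H (Fk x (S k)) F); auto. }
   destruct (Z.eq_dec z x) as [Ezx|Nzx].
   + apply Hext. intros w _. rewrite Fk_S. fold z. destruct (Z.eqb_spec w z); [|apply Bool.orb_false_r].
     subst. unfold Fk. rewrite Z.eqb_refl. reflexivity.
   + destruct (classic (St z)) as [Sz|Sz].
     * apply (reduce _ _ _ H (Fk x k) z x Sz); auto.
       -- unfold Fk. destruct (Z.eqb_spec z x); [contradiction|]. destruct (Z.ltb_spec z (Z.of_nat k)); subst z; [lia|].
          rewrite Bool.andb_false_r; auto.
       -- unfold Fk; rewrite Z.eqb_refl; auto.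
       -- apply Hext. intros w _. rewrite Fk_S. reflexivity.
     * apply Hext. intros w Sw. rewrite Fk_S. fold z. destruct (Z.eqb_spec w z); [|apply Bool.orb_false_r].
       subst; contradiction. Qed.

Lemma ind_interval_bound St lam Gam (H : hyps St lam Gam) (Nc : Z) :
  exists c, 0 <= c /\ forall w, St w -> ind (fun y => Z.ltb y Nc) w <= c * hf Gam lam w.
Proof. destruct (fin_max (qrate Gam lam) (Z.to_nat Nc)) as [M [HM HHM]]. exists M. split; auto.
 intros w Sw. unfold ind. pose proof (hf_pos _ _ _ H w Sw). destruct (Z.ltb_spec w Nc).
 - pose proof (h_nn _ _ _ H w Sw). assert (qrate Gam lam w <= M) by (apply HHM; lia).
   pose proof (q_pos _ _ _ H w Sw). unfold hf in *.
   apply (Rmult_le_reg_l (qrate Gam lam w)); auto. rewrite Rmult_1_r.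
   replace (qrate Gam lam w * (M * / qrate Gam lam w)) with M by (field; lra). lra.
 - apply Rmult_le_pos; lra. Qed.

Lemma survival St lam Gam (H : hyps St lam Gam) x V K N0 : St x ->
  (forall z, St z -> 0 <= V z) ->
  (forall M, exists Nm, forall y, St y -> (Nm <= y)%Z -> M < V y) -> 0 <= K ->
  (forall y, St y -> Top Gam lam (fun w => Z.eqb w x) V y <= V y + K * ind (fun w => Z.ltb w N0) y) ->
  (forall y, St y -> exists C, forall N, Ug Gam lam (fun w => Z.eqb w x) N (hf Gam lam) y <= C) ->
  forall y, St y -> Un_cv (fun n => Tpow Gam lam (fun w => Z.eqb w x) n (fun _ => 1) y) 0.
Proof. intros Sx HV Hinf HK HTV HU.
 set (Fx := fun w => Z.eqb w x).
 assert (HI : forall Nc y, St y -> exists C, forall N, Ug Gam lam Fx N (ind (fun w => Z.ltb w Nc)) y <= C).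
 { intros Nc y Sy. destruct (ind_interval_bound _ _ _ H Nc) as [c [Hc Hcb]]. destruct (HU y Sy) as [C HC].
   exists (c * C). intros N. eapply Rle_trans.
   apply (Ug_mono_g _ _ _ H _ _ (fun w => c * hf Gam lam w)); auto.
   rewrite Ug_scal. apply Rmult_le_compat_l; auto. }
 assert (HTV2 : forall n y, St y -> Tpow Gam lam Fx n V y <= V y + K * Ug Gam lam Fx n (ind (fun w => Z.ltb w N0)) y).
 { intros n; induction n; intros y Sy. simpl; lra.
   change (Top Gam lam Fx (Tpow Gam lam Fx n V) y <= V y + K * (ind (fun w => Z.ltb w N0) y + Top Gam lam Fx (Ug Gam lam Fx n (ind (fun w => Z.ltb w N0))) y)).
   eapply Rle_trans. apply (T_mono _ _ _ H _ _ (fun w => V w + K * Ug Gam lam Fx n (ind (fun w => Z.ltb w N0)) w)); auto.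
   rewrite T_plus, T_scal. pose proof (HTV y Sy). fold Fx in H0. lra. }
 intros y Sy eps Heps.
 destruct (HI N0 y Sy) as [Cb HCb].
 assert (HCb0 : 0 <= Cb) by (pose proof (HCb 0%nat); simpl in H0; lra).
 set (M := 2 * (V y + K * Cb) / eps + 1).
 assert (HM : 0 < M). { unfold M. pose proof (HV y Sy). assert (0 <= 2 * (V y + K * Cb) / eps).
   apply Rdiv_le_0_compat; auto. pose proof (Rmult_le_pos _ _ HK HCb0). lra. lra. }
 assert (HMe : (V y + K * Cb) / M <= eps / 2).
 { pose proof (HV y Sy). pose proof (Rmult_le_pos _ _ HK HCb0).
   apply (Rmult_le_reg_l M); auto. replace (M * ((V y + K * Cb) / M)) with (V y + K * Cb) by (field; lra).
   unfold M. replace ((2 * (V y + K * Cb) / eps + 1) * (eps / 2)) with ((V y + K * Cb) + eps/2) by (field; lra). lra. }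
 destruct (Hinf M) as [Nm HNm].
 destruct (HI Nm y Sy) as [Cc HCc].
 assert (Hone : forall n w, St w -> Tpow Gam lam Fx n (fun _ => 1) w <=
   Tpow Gam lam Fx n (ind (fun u => Z.ltb u Nm)) w + / M * Tpow Gam lam Fx n V w).
 { intros n w Sw. rewrite <- Tpow_scal, <- Tpow_plus. apply (Tpow_mono _ _ _ H); auto.
   intros u Su. unfold ind. destruct (Z.ltb_spec u Nm).
   - pose proof (HV u Su). assert (0 <= / M * V u) by (apply Rmult_le_pos; auto; left; apply Rinv_0_lt_compat; auto). lra.
   - pose proof (HNm u Su H0). assert (1 < / M * V u).
     { apply (Rmult_lt_reg_l M); auto. rewrite <- Rmult_assoc, Rinv_r, Rmult_1_l, Rmult_1_r by lra. auto. }
     lra. }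
 assert (Hex : exists n0, Tpow Gam lam Fx n0 (ind (fun u => Z.ltb u Nm)) y < eps / 2).
 { destruct (classic (exists n0, Tpow Gam lam Fx n0 (ind (fun u => Z.ltb u Nm)) y < eps / 2)) as [|Hn]; auto.
   exfalso. assert (Hall : forall n, eps / 2 <= Tpow Gam lam Fx n (ind (fun u => Z.ltb u Nm)) y).
   { intros n. apply Rnot_lt_le. intro; apply Hn; exists n; auto. }
   assert (Hg : forall N, INR N * (eps / 2) <= Ug Gam lam Fx N (ind (fun u => Z.ltb u Nm)) y).
   { induction N. simpl; lra. rewrite Ug_split, S_INR. pose proof (Hall N). lra. }
   destruct (INR_archimed (eps/2) Cc) as [N HN]. lra.
   pose proof (Hg N). pose proof (HCc N). lra. }
 destruct Hex as [n0 Hn0]. exists n0. intros n Hn. unfold Rdist. rewrite Rminus_0_r.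
 pose proof (Tpow_nonneg _ _ _ H Fx (fun _ => 1) n y Sy (fun _ _ => Rle_0_1)).
 rewrite Rabs_right by lra.
 pose proof (Tpow_one_le_n _ _ _ H Fx n0 n y Sy Hn).
 pose proof (Hone n0 y Sy). pose proof (HTV2 n0 y Sy). pose proof (HCb n0).
 assert (/ M * Tpow Gam lam Fx n0 V y <= (V y + K * Cb) / M).
 { unfold Rdiv. rewrite (Rmult_comm _ (/ M)). apply Rmult_le_compat_l. left; apply Rinv_0_lt_compat; auto.
   pose proof (Rmult_le_compat_l _ _ _ HK H4). lra. }
 lra. Qed.
Fixpoint hitb (x y : Z) (s : list Z) : bool :=
  match s with nil => Z.eqb y x | e :: s' => andb (negb (Z.eqb y x)) (hitb x (y + e)%Z s') end.

Lemma visits_cons y s : exists t, visits y s = y :: t.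
Proof. destruct s; simpl; eauto. Qed.

Lemma last_cons2 (a : Z) L d : L <> nil -> last (a :: L) d = last L d.
Proof. destruct L; [congruence|reflexivity]. Qed.
Lemma removelast_cons2 (a : Z) L : L <> nil -> removelast (a :: L) = a :: removelast L.
Proof. destruct L; [congruence|reflexivity]. Qed.
Lemma visits_ne y s : visits y s <> nil.
Proof. destruct s; simpl; congruence. Qed.

Lemma hit_visits x s : forall y d,
  andb (Z.eqb (last (visits y s) d) x) (negb (existsb (fun w => Z.eqb w x) (removelast (visits y s)))) = hitb x y s.
Proof. induction s as [|e s IH]; intros y d.
 - simpl. destruct (Z.eqb y x); reflexivity.
 - change (visits y (e :: s)) with (y :: visits (y + e)%Z s).
   rewrite last_cons2, removelast_cons2 by apply visits_ne.
   change (existsb (fun w => Z.eqb w x) (y :: removelast (visits (y + e)%Z s))) with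
     (orb (Z.eqb y x) (existsb (fun w => Z.eqb w x) (removelast (visits (y + e)%Z s)))).
   change (hitb x y (e :: s)) with (andb (negb (Z.eqb y x)) (hitb x (y + e)%Z s)).
   rewrite <- (IH (y + e)%Z d).
   destruct (Z.eqb y x), (Z.eqb (last (visits (y + e) s) d) x), (existsb (fun w => Z.eqb w x) (removelast (visits (y + e) s))); reflexivity. Qed.

Lemma fr_hit x e s : firstReturnb x (e :: s) = hitb x (x + e)%Z s.
Proof. unfold firstReturnb.
 change (visits x (e :: s)) with (x :: visits (x + e)%Z s).
 rewrite last_cons2 by apply visits_ne.
 change (tl (x :: visits (x + e)%Z s)) with (visits (x + e)%Z s). apply hit_visits. Qed.

Definition sumL (L : list (list Z)) (F : list Z -> R) : R := fold_right Rplus 0 (map F L).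

Lemma sumL_app L1 L2 F : sumL (L1 ++ L2) F = sumL L1 F + sumL L2 F.
Proof. unfold sumL. rewrite map_app. induction L1; simpl. lra. rewrite IHL1. lra. Qed.

Lemma sumL_stepS G n F : sumL (stepSeqs G (S n)) F = sumG G (fun e => sumL (stepSeqs G n) (fun s => F (e :: s))).
Proof. change (stepSeqs G (S n)) with (flat_map (fun e => map (cons e) (stepSeqs G n)) G).
 generalize (stepSeqs G n) as L. intros L.
 induction G as [|a G IH]. reflexivity.
 change (flat_map (fun e => map (cons e) L) (a :: G)) with (map (cons a) L ++ flat_map (fun e => map (cons e) L) G).
 rewrite sumL_app, IH, sumG_cons.
 f_equal. unfold sumL. rewrite map_map. reflexivity. Qed.

Lemma sumL_ext L F1 F2 : (forall s, F1 s = F2 s) -> sumL L F1 = sumL L F2.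
Proof. intros H; unfold sumL. f_equal. apply map_ext. auto. Qed.
Lemma sumL_plus L F1 F2 : sumL L (fun s => F1 s + F2 s) = sumL L F1 + sumL L F2.
Proof. unfold sumL; induction L; simpl. lra. rewrite IHL; lra. Qed.
Lemma sumL_scal L c F : sumL L (fun s => c * F s) = c * sumL L F.
Proof. unfold sumL; induction L; simpl. lra. rewrite IHL; lra. Qed.
Lemma sumL_zero L : sumL L (fun _ => 0) = 0.
Proof. unfold sumL; induction L; simpl. lra. rewrite IHL; lra. Qed.

Lemma sumG_zero_ext l f : (forall e, f e = 0) -> sumG l f = 0.
Proof. intros H. transitivity (sumG l (fun _ => 0)). apply sumG_ext; auto. apply sumG_zero. Qed.
Lemma sumL_zero_ext L F : (forall s, F s = 0) -> sumL L F = 0.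
Proof. intros H. transitivity (sumL L (fun _ => 0)). apply sumL_ext; auto. apply sumL_zero. Qed.

Definition Hn Gam lam x n y : R :=
  sumL (stepSeqs (realSteps Gam) n) (fun s => if hitb x y s then pathProb Gam lam y s else 0).
Definition HTn Gam lam x n y : R :=
  sumL (stepSeqs (realSteps Gam) n) (fun s => if hitb x y s then pathProb Gam lam y s * holdTime Gam lam y s else 0).

Lemma Hn_0 Gam lam x y : Hn Gam lam x 0 y = ind (fun w => Z.eqb w x) y.
Proof. unfold Hn, sumL, ind. simpl. destruct (Z.eqb y x); lra. Qed.

Lemma Hn_S Gam lam x n y : Hn Gam lam x (S n) y = Top Gam lam (fun w => Z.eqb w x) (Hn Gam lam x n) y.
Proof. unfold Hn at 1. rewrite sumL_stepS. unfold Top, Pop. destruct (Z.eqb y x) eqn:E.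
 - apply sumG_zero_ext; intros e. apply sumL_zero_ext; intros s. simpl. rewrite E. reflexivity.
 - apply sumG_ext; intros e _. unfold Hn. rewrite <- sumL_scal. apply sumL_ext; intros s. simpl. rewrite E. simpl.
   destruct (hitb x (y + e) s); lra. Qed.

Lemma HTn_0 Gam lam x y : HTn Gam lam x 0 y = 0.
Proof. unfold HTn, sumL. simpl. destruct (Z.eqb y x); lra. Qed.

Lemma HTn_S Gam lam x n y : HTn Gam lam x (S n) y =
  hf Gam lam y * Hn Gam lam x (S n) y + Top Gam lam (fun w => Z.eqb w x) (HTn Gam lam x n) y.
Proof. rewrite Hn_S. unfold HTn at 1. rewrite sumL_stepS. unfold Top, Pop. destruct (Z.eqb y x) eqn:E.
 - rewrite Rmult_0_r, Rplus_0_l. apply sumG_zero_ext; intros e. apply sumL_zero_ext; intros s. simpl. rewrite E. reflexivity.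
 - rewrite <- sumG_scal, <- sumG_plus. apply sumG_ext; intros e _. unfold HTn, Hn.
   rewrite <- !sumL_scal, <- sumL_plus. apply sumL_ext; intros s. simpl. rewrite E. simpl.
   unfold hf. destruct (hitb x (y + e) s); lra. Qed.

Lemma fRP_eq Gam lam x n : firstRetProb Gam lam x (S n) = Pop Gam lam (Hn Gam lam x n) x.
Proof. unfold firstRetProb. fold (sumL (stepSeqs (realSteps Gam) (S n))
   (fun s => if firstReturnb x s then pathProb Gam lam x s else 0)).
 rewrite sumL_stepS. unfold Pop. apply sumG_ext; intros e _. unfold Hn. rewrite <- sumL_scal.
 apply sumL_ext; intros s. rewrite fr_hit. simpl. destruct (hitb x (x + e) s); lra. Qed.

Lemma fRT_eq Gam lam x n : firstRetTime Gam lam x (S n) =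
  Pop Gam lam (fun z => hf Gam lam x * Hn Gam lam x n z + HTn Gam lam x n z) x.
Proof. unfold firstRetTime. fold (sumL (stepSeqs (realSteps Gam) (S n))
   (fun s => if firstReturnb x s then pathProb Gam lam x s * holdTime Gam lam x s else 0)).
 rewrite sumL_stepS. unfold Pop. apply sumG_ext; intros e _. unfold Hn, HTn.
 rewrite <- !sumL_scal, <- sumL_plus, <- sumL_scal.
 apply sumL_ext; intros s. rewrite fr_hit. simpl. unfold hf. destruct (hitb x (x + e) s); lra. Qed.
Lemma sum_Tpow_Ug Gam lam F g N z : sum_f_R0 (fun n => Tpow Gam lam F n g z) N = Ug Gam lam F (S N) g z.
Proof. induction N. simpl. rewrite T_zero; lra. rewrite Ug_split. simpl sum_f_R0. rewrite IHN. reflexivity. Qed.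

Lemma Ug_ind_one St lam Gam (H : hyps St lam Gam) F N y : St y ->
  Ug Gam lam F N (ind F) y + Tpow Gam lam F N (fun _ => 1) y = 1.
Proof. revert y; induction N; intros y Sy. simpl; lra.
 change (ind F y + Top Gam lam F (Ug Gam lam F N (ind F)) y + Top Gam lam F (Tpow Gam lam F N (fun _ => 1)) y = 1).
 rewrite Rplus_assoc, <- T_plus. rewrite (T_ext _ _ _ H F _ (fun _ => 1)); auto.
 unfold Top, ind. destruct (F y). lra. rewrite (P_one _ _ _ H); auto. lra. Qed.

Lemma Hn_Tpow Gam lam x n : Hn Gam lam x n = Tpow Gam lam (fun w => Z.eqb w x) n (ind (fun w => Z.eqb w x)).
Proof. induction n; apply functional_extensionality; intros y. apply Hn_0. rewrite Hn_S, IHn. reflexivity. Qed.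

Lemma Un_cv_ext u v l : (forall n, u n = v n) -> Un_cv u l -> Un_cv v l.
Proof. intros E Hc eps He. destruct (Hc eps He) as [N HN]. exists N. intros; rewrite <- E; auto. Qed.
Lemma Un_cv_const c : Un_cv (fun _ => c) c.
Proof. intros eps He. exists 0%nat. intros. unfold Rdist. rewrite Rminus_diag, Rabs_R0; lra. Qed.

Lemma Un_cv_shift u l : Un_cv u l -> Un_cv (fun n => u (S n)) l.
Proof. intros H eps He. destruct (H eps He) as [N HN]. exists N. intros; apply HN; lia. Qed.

Lemma sum_plus' (a b : nat -> R) N : sum_f_R0 (fun n => a n + b n) N = sum_f_R0 a N + sum_f_R0 b N.
Proof. induction N; simpl; [lra|]. rewrite IHN; lra. Qed.
Lemma sum_scal' c (a : nat -> R) N : sum_f_R0 (fun n => c * a n) N = c * sum_f_R0 a N.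
Proof. induction N; simpl; [lra|]. rewrite IHN; lra. Qed.
Lemma sum_shift (a : nat -> R) N : sum_f_R0 a (S N) = a 0%nat + sum_f_R0 (fun n => a (S n)) N.
Proof. induction N. simpl; lra. change (sum_f_R0 a (S (S N))) with (sum_f_R0 a (S N) + a (S (S N))).
 rewrite IHN. simpl. lra. Qed.

Theorem foster_pr St lam Gam (H : hyps St lam Gam) V eps N0 : 0 < eps ->
  (forall z, St z -> 0 <= V z) ->
  (forall M, exists Nm, forall y, St y -> (Nm <= y)%Z -> M < V y) ->
  (forall y, St y -> (N0 <= y)%Z -> sumG Gam (fun e => lam e y * (V (y + e)%Z - V y)) <= - eps) ->
  positive_recurrent St Gam lam.
Proof. intros Heps HV Hinf Hdr x Sx.
 set (Fx := fun w => Z.eqb w x).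
 assert (Hhf : forall w, St w -> 0 <= hf Gam lam w) by (intros; left; apply (hf_pos _ _ _ H); auto).
 assert (HPV : forall y, St y -> Pop Gam lam V y - V y = hf Gam lam y * sumG Gam (fun e => lam e y * (V (y + e)%Z - V y))).
 { intros y Sy.
   assert (E1 : Pop Gam lam (fun z => 1 * V z + - V y) y = 1 * Pop Gam lam V y + - V y) by (apply (P_affine _ _ _ H); auto).
   replace (Pop Gam lam V y - V y) with (Pop Gam lam (fun z => 1 * V z + - V y) y) by lra.
   rewrite <- (sumG_realSteps Gam (fun e => lam e y * (V (y + e)%Z - V y))).
   2:{ rewrite Z.add_0_r. ring. }
   unfold Pop. rewrite <- sumG_scal. apply sumG_ext. intros e _. unfold jumpP, hf. unfold Rdiv. ring. }
 set (k0 := Z.to_nat N0).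
 assert (Hk0 : forall y, St y -> Fk x k0 y = false -> Pop Gam lam V y <= V y - eps * hf Gam lam y).
 { intros y Sy E. unfold Fk in E. apply Bool.orb_false_iff in E as [E1 E2].
   pose proof (h_nn _ _ _ H y Sy). apply Z.leb_le in H0. rewrite H0 in E2. simpl in E2.
   apply Z.ltb_ge in E2. unfold k0 in E2. assert (N0 <= y)%Z by lia.
   pose proof (HPV y Sy). pose proof (Hdr y Sy H1). pose proof (Hhf y Sy).
   pose proof (Rmult_le_compat_l _ _ _ H4 H3). lra. }
 destruct (fin_max (hf Gam lam) k0) as [Hm0 [Hm0p Hm0b]].
 set (Hm := Rmax Hm0 (hf Gam lam x)).
 assert (Hbase : forall y, St y -> exists C, forall N, Ug Gam lam (Fk x k0) N (hf Gam lam) y <= C).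
 { intros y Sy. exists (V y / eps + Hm). intros N.
   apply (foster_base _ _ _ H _ V eps Hm); auto.
   - unfold Hm; eapply Rle_trans; [exact Hm0p|apply Rmax_l].
   - intros w Sw E. unfold Fk in E. apply Bool.orb_true_iff in E as [E|E].
     apply Z.eqb_eq in E; subst w. apply Rmax_r.
     apply Bool.andb_true_iff in E as [E1 E2]. apply Z.leb_le in E1. apply Z.ltb_lt in E2.
     eapply Rle_trans; [apply Hm0b; lia|apply Rmax_l]. }
 pose proof (reduce_all _ _ _ H x Sx k0 Hbase) as HU. fold Fx in HU.
 destruct (fin_max (fun y => Pop Gam lam V y - V y) k0) as [K [HK HKb]].
 assert (HTV : forall y, St y -> Top Gam lam Fx V y <= V y + K * ind (fun w => Z.ltb w (Z.of_nat k0)) y).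
 { intros y Sy. pose proof (HV y Sy). unfold Top, Fx, ind. destruct (Z.eqb y x) eqn:Ex.
   - destruct (Z.ltb y (Z.of_nat k0)); nra.
   - destruct (Z.ltb_spec y (Z.of_nat k0)).
     + pose proof (h_nn _ _ _ H y Sy). pose proof (HKb y ltac:(lia)). lra.
     + assert (Fk x k0 y = false). { unfold Fk. rewrite Ex. destruct (Z.ltb_spec y (Z.of_nat k0)); [lia|].
         rewrite Bool.andb_false_r; reflexivity. }
       pose proof (Hk0 y Sy H2). pose proof (Hhf y Sy). nra. }
 pose proof (survival _ _ _ H x V K (Z.of_nat k0) Sx HV Hinf HK HTV HU) as Hsurv. fold Fx in Hsurv.
 assert (Hsum : forall N z, St z -> sum_f_R0 (fun n => Hn Gam lam x n z) N = 1 - Tpow Gam lam Fx (S N) (fun _ => 1) z).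
 { intros N z Sz.
   replace (fun n => Hn Gam lam x n z) with (fun n => Tpow Gam lam Fx n (ind Fx) z)
     by (apply functional_extensionality; intros; rewrite Hn_Tpow; reflexivity).
   rewrite sum_Tpow_Ug.
   pose proof (Ug_ind_one _ _ _ H Fx (S N) z Sz). lra. }
 assert (HHn : forall n z, St z -> 0 <= Hn Gam lam x n z).
 { intros; rewrite Hn_Tpow; apply (Tpow_nonneg _ _ _ H); auto; intros; apply ind_nonneg. }
 assert (HHT : forall n z, St z -> 0 <= HTn Gam lam x n z).
 { intros n; induction n; intros z Sz. rewrite HTn_0; lra. rewrite HTn_S.
   pose proof (HHn (S n) z Sz). pose proof (Hhf z Sz). pose proof (T_nonneg _ _ _ H Fx _ z Sz IHn). fold Fx. nra. }
 split.
 -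
   unfold infinite_sum. fold (Un_cv (sum_f_R0 (fun n => firstRetProb Gam lam x (S n))) 1).
   assert (Heq : forall N, 1 - Pop Gam lam (Tpow Gam lam Fx (S N) (fun _ => 1)) x =
     sum_f_R0 (fun n => firstRetProb Gam lam x (S n)) N).
   { intros N. replace (fun n => firstRetProb Gam lam x (S n)) with (fun n => Pop Gam lam (Hn Gam lam x n) x)
       by (apply functional_extensionality; intros; rewrite fRP_eq; reflexivity).
     rewrite <- P_sum. rewrite (P_ext _ _ _ H (fun z => sum_f_R0 (fun n => Hn Gam lam x n z) N) (fun z => -1 * Tpow Gam lam Fx (S N) (fun _ => 1) z + 1)); auto.
     rewrite (P_affine _ _ _ H); auto. lra. intros z Sz. rewrite Hsum; auto. lra. }
   apply (Un_cv_ext _ _ _ Heq).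
   assert (Hc : Un_cv (fun N => 1 - Pop Gam lam (Tpow Gam lam Fx (S N) (fun _ => 1)) x) (1 - 0)).
   2:{ rewrite Rminus_0_r in Hc; exact Hc. }
   apply (CV_minus (fun _ => 1)). apply Un_cv_const.
   unfold Pop. rewrite <- (sumG_zero_ext (realSteps Gam) (fun e => jumpP Gam lam x e * 0)) by (intros; ring).
   apply (sumG_cv _ (fun N e => jumpP Gam lam x e * Tpow Gam lam Fx (S N) (fun _ => 1) (x + e)%Z)).
   intros e _. destruct (classic (St (x + e)%Z)) as [Se|Se].
   + apply (CV_mult (fun _ => jumpP Gam lam x e)). apply Un_cv_const. apply (Un_cv_shift (fun n => Tpow Gam lam Fx n (fun _ => 1) (x + e)%Z)). apply Hsurv; auto.
   + rewrite (jumpP_out _ _ _ H x e Sx Se). apply (Un_cv_ext (fun _ => 0 * 0)). intros; ring. apply Un_cv_const.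
 -
   assert (HS : forall N z, St z -> sum_f_R0 (fun n => HTn Gam lam x n z) N <= Ug Gam lam Fx (S N) (hf Gam lam) z).
   { intros N; induction N; intros z Sz.
     - simpl. rewrite HTn_0, T_zero. pose proof (Hhf z Sz). lra.
     - rewrite sum_shift, HTn_0, Rplus_0_l.
       replace (fun n => HTn Gam lam x (S n) z) with
         (fun n => hf Gam lam z * Hn Gam lam x (S n) z + Top Gam lam Fx (HTn Gam lam x n) z)
         by (apply functional_extensionality; intros; rewrite HTn_S; reflexivity).
       rewrite sum_plus', sum_scal', <- T_sum.
       assert (sum_f_R0 (fun n => Hn Gam lam x (S n) z) N <= 1).
       { pose proof (Hsum (S N) z Sz). rewrite sum_shift in H0. pose proof (HHn 0%nat z Sz).
         pose proof (Tpow_nonneg _ _ _ H Fx (fun _ => 1) (S (S N)) z Sz (fun _ _ => Rle_0_1)). lra. }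
       change (Ug Gam lam Fx (S (S N)) (hf Gam lam) z) with
         (hf Gam lam z + Top Gam lam Fx (Ug Gam lam Fx (S N) (hf Gam lam)) z).
       pose proof (T_mono _ _ _ H Fx _ _ z Sz IHN). pose proof (Hhf z Sz).
       pose proof (Rmult_le_compat_l _ _ _ H2 H0). lra. }
   assert (Hbnd : exists C, forall N, sum_f_R0 (fun n => firstRetTime Gam lam x (S n)) N <= C).
   { assert (Heq : forall N, sum_f_R0 (fun n => firstRetTime Gam lam x (S n)) N =
       Pop Gam lam (fun z => sum_f_R0 (fun n => hf Gam lam x * Hn Gam lam x n z + HTn Gam lam x n z) N) x).
     { intros N. rewrite P_sum. apply sum_eq. intros; apply fRT_eq. }
     destruct (P_bound _ _ _ H (fun N z => sum_f_R0 (fun n => hf Gam lam x * Hn Gam lam x n z + HTn Gam lam x n z) N) x Sx)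
       as [C HC].
     { intros z Sz. destruct (HU z Sz) as [Cz HCz]. exists (hf Gam lam x + Cz). intros N.
       rewrite sum_plus', sum_scal', Hsum by auto. pose proof (HS N z Sz). pose proof (HCz (S N)).
       pose proof (Tpow_nonneg _ _ _ H Fx (fun _ => 1) (S N) z Sz (fun _ _ => Rle_0_1)). pose proof (Hhf x Sx). nra. }
     exists C. intros N. rewrite Heq. apply HC. }
   destruct Hbnd as [C HC].
   assert (Hg : Un_growing (sum_f_R0 (fun n => firstRetTime Gam lam x (S n)))).
   { intros N. simpl. rewrite fRT_eq. assert (0 <= Pop Gam lam (fun z => hf Gam lam x * Hn Gam lam x (S N) z + HTn Gam lam x (S N) z) x).
     { apply (P_nonneg _ _ _ H); auto. intros z Sz. pose proof (HHn (S N) z Sz). pose proof (HHT (S N) z Sz).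
       pose proof (Hhf x Sx). nra. }
     lra. }
   destruct (growing_cv _ Hg) as [l Hl].
   { exists C. intros r [N ->]. apply HC. }
   exists l. exact Hl.
Qed.
From Coquelicot Require Import Coquelicot.

Lemma taylor2 (f f1 f2 : R -> R) (y E K e : R) :
  (forall t, y - E <= t <= y + E -> derivable_pt_lim f t (f1 t)) ->
  (forall t, y - E <= t <= y + E -> derivable_pt_lim f1 t (f2 t)) ->
  (forall t, y - E <= t <= y + E -> f2 t <= K) -> Rabs e <= E ->
  f (y + e) <= f y + f1 y * e + K * e ^ 2 / 2.
Proof. intros Hf Hf1 Hf2 He.
 set (phi1 := fun t => f1 y + K * (t - y) - f1 t).
 set (phi := fun t => f y + f1 y * (t - y) + K * (t - y) ^ 2 / 2 - f t).
 assert (Dphi1 : forall t, y - E <= t <= y + E -> derivable_pt_lim phi1 t (K - f2 t)).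
 { intros t Ht. assert (derivable_pt_lim (fun t => f1 y + K * (t - y)) t K).
   { apply is_derive_Reals. auto_derive; auto. ring. }
   exact (derivable_pt_lim_minus _ _ _ _ _ H (Hf1 t Ht)). }
 assert (Dphi : forall t, y - E <= t <= y + E -> derivable_pt_lim phi t (phi1 t)).
 { intros t Ht. assert (derivable_pt_lim (fun t => f y + f1 y * (t - y) + K * (t - y) ^ 2 / 2) t (f1 y + K * (t - y))).
   { apply is_derive_Reals. auto_derive; auto. field. }
   exact (derivable_pt_lim_minus _ _ _ _ _ H (Hf t Ht)). }
 assert (HE : 0 <= E) by (pose proof (Rabs_pos e); lra).
 assert (He2 : - E <= e <= E).
 { pose proof (Rle_abs e). pose proof (Rle_abs (- e)). rewrite Rabs_Ropp in H0. lra. }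
 assert (A : forall t, y <= t <= y + E -> 0 <= phi1 t).
 { intros t Ht. destruct (Req_dec t y) as [->|Hne]. unfold phi1; lra.
   destruct (MVT_cor2 phi1 (fun t => K - f2 t) y t) as [c [Hc1 Hc2]]. lra.
   intros c Hc; apply Dphi1; lra.
   assert (phi1 y = 0) by (unfold phi1; ring). pose proof (Hf2 c ltac:(lra)). nra. }
 assert (B : forall t, y - E <= t <= y -> phi1 t <= 0).
 { intros t Ht. destruct (Req_dec t y) as [->|Hne]. unfold phi1; lra.
   destruct (MVT_cor2 phi1 (fun t => K - f2 t) t y) as [c [Hc1 Hc2]]. lra.
   intros c Hc; apply Dphi1; lra.
   assert (phi1 y = 0) by (unfold phi1; ring). pose proof (Hf2 c ltac:(lra)). nra. }
 assert (phi (y + e) >= 0).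
 { assert (phi y = 0) by (unfold phi; field).
   destruct (Rtotal_order e 0) as [Hlt|[Heq|Hgt]].
   - destruct (MVT_cor2 phi phi1 (y + e) y) as [c [Hc1 Hc2]]. lra.
     intros c Hc; apply Dphi; lra.
     pose proof (B c ltac:(lra)). nra.
   - subst. rewrite Rplus_0_r; lra.
   - destruct (MVT_cor2 phi phi1 y (y + e)) as [c [Hc1 Hc2]]. lra.
     intros c Hc; apply Dphi; lra.
     pose proof (A c ltac:(lra)). nra. }
 unfold phi in H. lra. Qed.
Lemma drift_bound Gam lam y (g : Z -> R) f1 K :
  (forall e, In e Gam -> 0 <= lam e y) ->
  (forall e, In e Gam -> g (y + e)%Z - g y <= f1 * IZR e + K * IZR e ^ 2 / 2) ->
  sumG Gam (fun e => lam e y * (g (y + e)%Z - g y)) <= f1 * drift Gam lam y + K * vdiff Gam lam y.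
Proof. intros Hl Hg. eapply Rle_trans.
 apply (sumG_le _ _ (fun e => f1 * (IZR e * lam e y) + (K / 2) * (IZR e ^ 2 * lam e y))).
 intros e He. pose proof (Hl e He). pose proof (Hg e He).
 replace (f1 * (IZR e * lam e y) + K / 2 * (IZR e ^ 2 * lam e y)) with (lam e y * (f1 * IZR e + K * IZR e ^ 2 / 2)) by field.
 apply Rmult_le_compat_l; auto.
 rewrite sumG_plus, !sumG_scal. unfold drift, vdiff. right; field. Qed.

Lemma Ebound Gam e : In e Gam -> Rabs (IZR e) <= sumG Gam (fun e => Rabs (IZR e)).
Proof. intros. apply (sumG_In_bound _ (fun e => Rabs (IZR e))); auto. intros; apply Rabs_pos. Qed.

Lemma exp_near1 w : Rabs w <= / 2 -> Rabs (exp w - 1) <= 2 * Rabs w.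
Proof. intros Hw. pose proof (exp_ineq1_le w). pose proof (exp_ineq1_le (- w)).
 assert (Hw2 : - / 2 <= w <= / 2). { pose proof (Rle_abs w). pose proof (Rle_abs (- w)). rewrite Rabs_Ropp in H2. lra. }
 pose proof (exp_pos w). rewrite exp_Ropp in H0.
 assert (exp w * (1 - w) <= 1).
 { apply (Rmult_le_reg_r (/ exp w)). apply Rinv_0_lt_compat; auto.
   rewrite Rmult_comm, <- Rmult_assoc, Rinv_l, Rmult_1_l by lra. lra. }
 apply Rabs_le. destruct (Rle_dec 0 w).
 - rewrite Rabs_right by lra. nra.
 - rewrite Rabs_left1 by lra. nra. Qed.

Lemma ln_diff1 t y : 0 < t -> 0 < y -> y * (ln t - ln y) <= t - y.
Proof. intros Ht Hy. pose proof (exp_ineq1_le (ln t - ln y)).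
 unfold Rminus at 2 in H. rewrite exp_plus, exp_Ropp, !exp_ln in H by auto.
 apply (Rmult_le_compat_l y) in H; [|lra]. replace (y * (t * / y)) with t in H by (field; lra). nra. Qed.

Lemma ln_diff2 t y : 0 < t -> 0 < y -> t - y <= t * (ln t - ln y).
Proof. intros Ht Hy. pose proof (ln_diff1 y t Hy Ht). nra. Qed.

Lemma ln_diff_abs t y E : 0 < y - E -> y - E <= t <= y + E -> (y - E) * Rabs (ln t - ln y) <= E.
Proof. intros H1 H2. pose proof (ln_diff1 t y ltac:(lra) ltac:(lra)). pose proof (ln_diff2 t y ltac:(lra) ltac:(lra)).
 destruct (Rle_dec 0 (ln t - ln y)).
 - rewrite Rabs_right by lra. nra.
 - rewrite Rabs_left1 by lra. nra. Qed.

Lemma up_ge (r : R) : forall z : Z, (up r <= z)%Z -> r < IZR z.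
Proof. intros z Hz. destruct (archimed r) as [H1 _]. apply IZR_le in Hz. lra. Qed.
Lemma pw_split s t : 0 < t -> exp (s * ln t) = exp ((s - 2) * ln t) * t * t.
Proof. intros Ht. replace (s * ln t) with ((s - 2) * ln t + ln t + ln t) by ring.
 rewrite !exp_plus, exp_ln by auto. ring. Qed.

Lemma power_case St lam Gam (H : hyps St lam Gam) c C Ng b Nl : c < 2 -> 0 < C -> b < c - 1 ->
  (forall y, St y -> (Ng <= y)%Z -> Rpower (IZR y) c <= C * vdiff Gam lam y) ->
  (forall y, St y -> (Nl <= y)%Z -> Jfun Gam lam y <= b) -> positive_recurrent St Gam lam.
Proof. intros Hc HC Hb Hg HJ.
 set (a := 2 - c). assert (Ha : 0 < a) by (unfold a; lra).
 set (delta := c - 1 - b). assert (Hd : 0 < delta) by (unfold delta; lra).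
 set (E := sumG Gam (fun e => Rabs (IZR e))).
 assert (HE : 0 <= E) by (apply sumG_nonneg; intros; apply Rabs_pos).
 set (eta := delta / (2 * (Rabs (a - 1) + 1))).
 assert (Hra : 0 <= Rabs (a - 1)) by apply Rabs_pos.
 assert (Heta : 0 < eta) by (unfold eta; apply Rdiv_lt_0_compat; lra).
 assert (Heta2 : Rabs (a - 1) * eta <= delta / 2).
 { unfold eta. apply (Rmult_le_reg_r (2 * (Rabs (a - 1) + 1))). lra.
   replace (Rabs (a - 1) * (delta / (2 * (Rabs (a - 1) + 1))) * (2 * (Rabs (a - 1) + 1))) with (Rabs (a - 1) * delta) by (field; lra).
   nra. }
 set (theta := Rmin (/ 2) (eta / 2)).
 assert (Hth : 0 < theta) by (unfold theta; apply Rmin_pos; lra).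
 assert (Hth1 : theta <= / 2) by apply Rmin_l.
 assert (Hth2 : theta <= eta / 2) by apply Rmin_r.
 set (D := Rabs (a - 2) * E).
 assert (HD : 0 <= D) by (unfold D; apply Rmult_le_pos; auto; apply Rabs_pos).
 set (R0 := E + 1 + D / theta).
 set (N0 := Z.max (Z.max Ng Nl) (up R0)).
 apply (foster_pr St lam Gam H (fun z => exp (a * ln (IZR z))) (a * delta / (2 * C)) N0).
 - apply Rdiv_lt_0_compat; nra.
 - intros; left; apply exp_pos.
 - intros M. exists (up (exp (ln (Rabs M + 1) / a))). intros y Sy Hy. pose proof (up_ge _ _ Hy) as Hy'.
   pose proof (exp_pos (ln (Rabs M + 1) / a)).
   assert (ln (Rabs M + 1) / a < ln (IZR y)).
   { rewrite <- (ln_exp (ln (Rabs M + 1) / a)) at 1. apply ln_increasing; auto. }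
   assert (ln (Rabs M + 1) < a * ln (IZR y)).
   { apply (Rmult_lt_compat_l a) in H1; auto. replace (a * (ln (Rabs M + 1) / a)) with (ln (Rabs M + 1)) in H1 by (field; lra). auto. }
   apply exp_increasing in H2. rewrite exp_ln in H2 by (pose proof (Rabs_pos M); lra).
   pose proof (Rle_abs M). lra.
 - intros y Sy Hy.
   assert (HyNg : (Ng <= y)%Z) by lia. assert (HyNl : (Nl <= y)%Z) by lia.
   assert (HyR : R0 < IZR y) by (apply up_ge; lia).
   set (yr := IZR y).
   assert (HDt : D / theta * theta = D) by (field; lra).
   assert (HDt0 : 0 <= D / theta) by (apply Rdiv_le_0_compat; auto).
   assert (Hyr1 : 1 <= yr - E) by (unfold R0 in HyR; fold yr in HyR; lra).
   assert (Hyr : 0 < yr) by lra.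
   assert (HDth : D <= theta * (yr - E)). { unfold R0 in HyR; fold yr in HyR. nra. }
   set (Y := exp ((a - 2) * ln yr)). assert (HY : 0 < Y) by apply exp_pos.
   set (K := Y * (a * (a - 1) + a * Rabs (a - 1) * eta)).
   pose proof (h_v _ _ _ H y Sy) as Hv.
   eapply Rle_trans.
   + apply (drift_bound Gam lam y (fun z => exp (a * ln (IZR z))) (a * exp (a * ln yr) / yr) K).
     intros; apply (h_l _ _ _ H); auto.
     intros e He. rewrite plus_IZR. fold yr.
     pose proof (Ebound Gam e He) as HeE. fold E in HeE.
     assert (T := taylor2 (fun t => exp (a * ln t)) (fun t => a * exp (a * ln t) / t)
        (fun t => a * (a - 1) * exp (a * ln t) / (t * t)) yr E K (IZR e)).
     cbv beta in T. cut (exp (a * ln (yr + IZR e)) <= exp (a * ln yr) + a * exp (a * ln yr) / yr * IZR e + K * IZR e ^ 2 / 2). lra.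
     apply T; auto.
     * intros t Ht. apply is_derive_Reals. auto_derive. lra. field. lra.
     * intros t Ht. apply is_derive_Reals. auto_derive. lra. field. lra.
     * intros t Ht. assert (Ht0 : 0 < t) by lra.
       rewrite (pw_split a t Ht0). replace (a * (a - 1) * (exp ((a - 2) * ln t) * t * t) / (t * t)) with
         (a * (a - 1) * exp ((a - 2) * ln t)) by (field; lra).
       set (w := (a - 2) * (ln t - ln yr)).
       assert (Hw : exp ((a - 2) * ln t) = Y * exp w).
       { unfold Y, w. rewrite <- exp_plus. f_equal. ring. }
       rewrite Hw.
       assert (Hlw : (yr - E) * Rabs (ln t - ln yr) <= E) by (apply ln_diff_abs; lra).
       assert (Hwt : Rabs w <= theta).
       { apply (Rmult_le_reg_r (yr - E)). lra. unfold w. rewrite Rabs_mult.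
         assert (0 <= Rabs (a - 2)) by apply Rabs_pos.
         assert (Rabs (a - 2) * (Rabs (ln t - ln yr) * (yr - E)) <= Rabs (a - 2) * E).
         { apply Rmult_le_compat_l; auto. lra. }
         unfold D in HDth. nra. }
       pose proof (exp_near1 w ltac:(lra)) as Hew.
       assert (Hex : (a - 1) * (exp w - 1) <= Rabs (a - 1) * eta).
       { eapply Rle_trans. apply Rle_abs. rewrite Rabs_mult. apply Rmult_le_compat_l; auto. lra. }
       unfold K. assert (0 < a * Y) by nra.
       replace (a * (a - 1) * (Y * exp w)) with (Y * (a * (a - 1)) + (a * Y) * ((a - 1) * (exp w - 1))) by ring.
       pose proof (Rmult_le_compat_l _ _ _ (Rlt_le _ _ H0) Hex). nra.
   +
     rewrite (pw_split a yr Hyr). fold Y.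
     replace (a * (Y * yr * yr) / yr) with (a * Y * yr) by (field; lra).
     pose proof (HJ y Sy HyNl) as HJy. unfold Jfun in HJy. fold yr in HJy.
     assert (Hmy : drift Gam lam y * yr <= b * vdiff Gam lam y).
     { apply (Rmult_le_compat_r (vdiff Gam lam y)) in HJy; [|lra].
       replace (drift Gam lam y * yr / vdiff Gam lam y * vdiff Gam lam y) with (drift Gam lam y * yr) in HJy by (field; lra). lra. }
     pose proof (Hg y Sy HyNg) as Hgy. unfold Rpower in Hgy. fold yr in Hgy.
     assert (HY1 : Y * exp (c * ln yr) = 1).
     { unfold Y. rewrite <- exp_plus. replace ((a - 2) * ln yr + c * ln yr) with 0 by (unfold a; ring). apply exp_0. }
     assert (HYv : 1 <= C * (Y * vdiff Gam lam y)).
     { rewrite <- HY1. replace (C * (Y * vdiff Gam lam y)) with (Y * (C * vdiff Gam lam y)) by ring.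
       apply Rmult_le_compat_l; lra. }
     assert (HYv2 : / C <= Y * vdiff Gam lam y).
     { apply (Rmult_le_reg_l C); auto. rewrite Rinv_r by lra. lra. }
     unfold K.
     assert (a * Y * yr * drift Gam lam y <= a * Y * (b * vdiff Gam lam y)).
     { replace (a * Y * yr * drift Gam lam y) with (a * Y * (drift Gam lam y * yr)) by ring.
       apply Rmult_le_compat_l; nra. }
     assert (Y * vdiff Gam lam y * (a * Rabs (a - 1) * eta) <= Y * vdiff Gam lam y * (a * (delta / 2))).
     { apply Rmult_le_compat_l. nra. nra. }
     assert (a * Y * (b * vdiff Gam lam y) + Y * (a * (a - 1) + a * Rabs (a - 1) * eta) * vdiff Gam lam y <=
       - (a * delta / 2) * (Y * vdiff Gam lam y)).
     { unfold delta in *. unfold a in *. nra. }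
     assert (- (a * delta / 2) * (Y * vdiff Gam lam y) <= - (a * delta / (2 * C))).
     { replace (- (a * delta / (2 * C))) with (- (a * delta / 2) * / C) by (field; lra).
       apply Rmult_le_compat_neg_l. nra. auto. }
     lra. Qed.
Lemma ln_ge1 t : 3 <= t -> 1 <= ln t.
Proof. intros Ht. pose proof exp_le_3. destruct (Rle_lt_or_eq_dec (exp 1) t) as [Hl|He]; [lra| |].
 - rewrite <- (ln_exp 1) at 1. left; apply ln_increasing; auto. apply exp_pos.
 - rewrite <- He, ln_exp. lra. Qed.

Lemma lnln_case St lam Gam (H : hyps St lam Gam) c C Ng b0 Nl : 2 < c -> 0 < C -> b0 < 1 ->
  (forall y, St y -> (Ng <= y)%Z -> Rpower (IZR y) c <= C * vdiff Gam lam y) ->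
  (forall y, St y -> (Nl <= y)%Z -> H1fun Gam lam y <= b0) -> positive_recurrent St Gam lam.
Proof. intros Hc HC Hb0 Hg HH.
 set (b := Rmax b0 0). assert (Hb : b < 1) by (unfold b; apply Rmax_lub_lt; lra).
 assert (Hb1 : 0 <= b) by apply Rmax_r. assert (Hbb : b0 <= b) by apply Rmax_l.
 set (beta := (1 + b) / 2).
 set (s := c - 2). assert (Hs : 0 < s) by (unfold s; lra).
 set (E := sumG Gam (fun e => Rabs (IZR e))).
 assert (HE : 0 <= E) by (apply sumG_nonneg; intros; apply Rabs_pos).
 set (Q := 120 * E / (1 - beta)). assert (HQ : 0 <= Q) by (unfold Q, beta; apply Rdiv_le_0_compat; lra).
 set (R0 := Rmax (E + 3) ((Q + 1) ^ 2)).
 set (N0 := Z.max (Z.max Ng Nl) (up R0)).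
 set (V := fun z => Rmax 0 (ln (ln (IZR z)))).
 apply (foster_pr St lam Gam H V ((1 - b) * s ^ 2 / (8 * C)) N0).
 - apply Rdiv_lt_0_compat; [|lra]. apply Rmult_lt_0_compat; [lra|]. nra.
 - intros; apply Rmax_l.
 - intros M. exists (up (exp (exp (Rabs M + 1)))). intros y Sy Hy. pose proof (up_ge _ _ Hy) as Hy'.
   pose proof (exp_pos (exp (Rabs M + 1))). pose proof (exp_pos (Rabs M + 1)).
   assert (exp (Rabs M + 1) < ln (IZR y)).
   { rewrite <- (ln_exp (exp (Rabs M + 1))) at 1. apply ln_increasing; auto. }
   assert (Rabs M + 1 < ln (ln (IZR y))).
   { rewrite <- (ln_exp (Rabs M + 1)) at 1. apply ln_increasing; auto. }
   unfold V. pose proof (Rmax_r 0 (ln (ln (IZR y)))). pose proof (Rle_abs M). lra.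
 - intros y Sy Hy.
   assert (HyNg : (Ng <= y)%Z) by lia. assert (HyNl : (Nl <= y)%Z) by lia.
   assert (HyR : R0 < IZR y) by (apply up_ge; lia).
   set (yr := IZR y).
   assert (Hy3 : E + 3 <= yr) by (pose proof (Rmax_l (E + 3) ((Q + 1) ^ 2)); fold R0 in H0; unfold yr; lra).
   assert (HyQ : (Q + 1) ^ 2 <= yr) by (pose proof (Rmax_r (E + 3) ((Q + 1) ^ 2)); fold R0 in H0; unfold yr; lra).
   assert (Hyr : 0 < yr) by lra.
   set (L := ln yr). assert (HL : 1 <= L) by (apply ln_ge1; lra).
   set (yp := yr + E). set (Lp := ln yp).
   assert (HLp : 1 <= Lp) by (apply ln_ge1; unfold yp; lra).
   set (K := - (Lp + 1) / (yp * yp * (Lp * Lp))).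
   pose proof (h_v _ _ _ H y Sy) as Hv.
   assert (HVz : forall t, 3 <= t -> Rmax 0 (ln (ln t)) = ln (ln t)).
   { intros t Ht. apply Rmax_right. pose proof (ln_ge1 t Ht). rewrite <- ln_1. destruct (Req_dec (ln t) 1) as [->|]; [lra|].
     left; apply ln_increasing; lra. }
   eapply Rle_trans.
   + apply (drift_bound Gam lam y V (/ (yr * L)) K).
     intros; apply (h_l _ _ _ H); auto.
     intros e He. unfold V. rewrite plus_IZR. fold yr.
     pose proof (Ebound Gam e He) as HeE. fold E in HeE.
     assert (He2 : - E <= IZR e <= E).
     { pose proof (Rle_abs (IZR e)). pose proof (Rle_abs (- IZR e)). rewrite Rabs_Ropp in H1. lra. }
     rewrite !HVz by lra.
     assert (T := taylor2 (fun t => ln (ln t)) (fun t => / (t * ln t))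
        (fun t => - (ln t + 1) / (t * t * (ln t * ln t))) yr E K (IZR e)).
     cbv beta in T. fold L in T. fold L. cut (ln (ln (yr + IZR e)) <= ln L + / (yr * L) * IZR e + K * IZR e ^ 2 / 2). lra.
     apply T; auto.
     * intros t Ht. assert (1 <= ln t) by (apply ln_ge1; lra). apply is_derive_Reals. auto_derive; [repeat split; lra|field; repeat split; lra].
     * intros t Ht. assert (1 <= ln t) by (apply ln_ge1; lra). apply is_derive_Reals. auto_derive.
       repeat split; try lra; try nra. field; repeat split; lra.
     * intros t Ht. assert (Hlt : 1 <= ln t) by (apply ln_ge1; lra).
       assert (Hlt2 : ln t <= Lp).
       { unfold Lp. destruct (Req_dec t yp) as [->|Hne]. lra. left; apply ln_increasing; unfold yp in *; lra. }
       unfold K. unfold Rdiv. rewrite !Ropp_mult_distr_l_reverse. apply Ropp_le_contravar.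
       assert (Ht0 : 0 < t) by lra. assert (Hyp0 : t <= yp) by (unfold yp; lra).
       assert (Hp1 : 0 < t * t * (ln t * ln t)) by (repeat apply Rmult_lt_0_compat; lra).
       assert (Hp2 : 0 < yp * yp * (Lp * Lp)) by (repeat apply Rmult_lt_0_compat; unfold yp in *; lra).
       apply (Rmult_le_reg_r (t * t * (ln t * ln t))). exact Hp1.
       replace ((ln t + 1) * / (t * t * (ln t * ln t)) * (t * t * (ln t * ln t))) with (ln t + 1) by (field; repeat split; apply Rgt_not_eq; unfold yp in *; lra).
       apply (Rmult_le_reg_r (yp * yp * (Lp * Lp))). exact Hp2.
       replace ((Lp + 1) * / (yp * yp * (Lp * Lp)) * (t * t * (ln t * ln t)) * (yp * yp * (Lp * Lp)))
         with ((Lp + 1) * (t * t * (ln t * ln t))) by (field; repeat split; apply Rgt_not_eq; unfold yp in *; lra).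
       assert (Ha1 : (Lp + 1) * (ln t * ln t) <= (ln t + 1) * (Lp * Lp)).
       { assert (0 <= (Lp - ln t) * (ln t * Lp + Lp + ln t)) by (apply Rmult_le_pos; nra).
         replace ((ln t + 1) * (Lp * Lp)) with ((Lp + 1) * (ln t * ln t) + (Lp - ln t) * (ln t * Lp + Lp + ln t)) by ring.
         lra. }
       assert (Ha2 : t * t <= yp * yp) by nra.
       assert (0 <= (ln t + 1) * (Lp * Lp)) by nra.
       assert (0 <= t * t) by nra.
       apply Rle_trans with ((ln t + 1) * (Lp * Lp) * (t * t)).
       replace ((Lp + 1) * (t * t * (ln t * ln t))) with ((Lp + 1) * (ln t * ln t) * (t * t)) by ring.
       apply Rmult_le_compat_r; auto.
       replace ((ln t + 1) * (yp * yp * (Lp * Lp))) with ((ln t + 1) * (Lp * Lp) * (yp * yp)) by ring.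
       apply Rmult_le_compat_l; auto.
   +
     pose proof (HH y Sy HyNl) as HHy. unfold H1fun in HHy. fold yr L in HHy.
     set (m := drift Gam lam y) in *. set (v := vdiff Gam lam y) in *.
     assert (Hm1 : L * (m * yr - v) <= b * v).
     { apply (Rmult_le_compat_r v) in HHy; [|lra].
       replace (L * (m * yr - v) / v * v) with (L * (m * yr - v)) in HHy by (field; repeat split; apply Rgt_not_eq; unfold yp in *; lra). nra. }
     set (r := Lp - L).
     assert (Hr1 : yr * r <= E) by (pose proof (ln_diff1 yp yr ltac:(unfold yp; lra) Hyr); unfold r, Lp, L, yp in *; lra).
     assert (Hr0 : 0 <= r) by (pose proof (ln_diff2 yp yr ltac:(unfold yp; lra) Hyr); unfold r, Lp, L, yp in *; nra).
     set (X := exp (L / 2)).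
     assert (HXX : X * X = yr) by (unfold X, L; rewrite <- exp_plus; replace (ln yr / 2 + ln yr / 2) with (ln yr) by field; apply exp_ln; auto).
     assert (HX0 : 0 < X) by apply exp_pos.
     assert (HLX : L <= 2 * X) by (pose proof (exp_ineq1_le (L / 2)); fold X in H0; lra).
     assert (HXQ : Q + 1 <= X) by nra.
     assert (HEL : 60 * E * L <= (1 - beta) * yr).
     { assert (Q * (1 - beta) = 120 * E) by (unfold Q, beta; field; lra).
       assert (0 < 1 - beta) by (unfold beta; lra).
       assert (60 * E * L <= 60 * E * (2 * X)) by (apply Rmult_le_compat_l; lra).
       assert (Q * X <= X * X) by (apply Rmult_le_compat_r; lra).
       assert ((1 - beta) * (Q * X) <= (1 - beta) * (X * X)) by (apply Rmult_le_compat_l; lra).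
       assert (120 * E * X = (1 - beta) * (Q * X)) by (rewrite <- H0; ring).
       rewrite <- HXX. lra. }
     assert (Hkey : (L + beta) * (yp * yp) * (Lp * Lp) <= (Lp + 1) * (yr * yr) * (L * L)).
     { assert (HLp2 : Lp = L + r) by (unfold r; ring). rewrite HLp2. unfold yp.
       assert (Hu1 : E <= yr) by lra.
       assert (Hbeta : 1/2 <= beta < 1) by (unfold beta; lra).
       assert (h0 : 0 <= r * yr) by (apply Rmult_le_pos; lra).
       assert (h1 : 2 * L * yr * (r * yr) <= 2 * L * yr * E) by (apply Rmult_le_compat_l; nra).
       assert (h2 : (r * yr) * (r * yr) <= E * E) by (apply Rmult_le_compat; lra).
       assert (h3 : E * E <= E * yr) by (apply Rmult_le_compat_l; lra).
       assert (h4 : E * yr <= L * L * E * yr).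
       { assert (0 <= E * yr) by (apply Rmult_le_pos; lra). assert (1 <= L * L) by nra.
         replace (L * L * E * yr) with ((L * L) * (E * yr)) by ring. nra. }
       assert (h5 : L * yr * E <= L * L * E * yr).
       { assert (0 <= L * E * yr) by (repeat apply Rmult_le_pos; lra).
         replace (L * L * E * yr) with (L * (L * E * yr)) by ring. nra. }
       assert (A1 : (L + r) * (L + r) * (yr * yr) <= L * L * (yr * yr) + 3 * L * L * E * yr).
       { replace ((L + r) * (L + r) * (yr * yr)) with (L * L * (yr * yr) + 2 * L * yr * (r * yr) + (r * yr) * (r * yr)) by ring.
         lra. }
       assert (A2 : (yr + E) * (yr + E) <= yr * yr + 3 * E * yr) by lra.
       assert (A3 : (yr + E) * (yr + E) * ((L + r) * (L + r)) * (yr * yr) <= (yr * yr + 3 * E * yr) * (L * L * (yr * yr) + 3 * L * L * E * yr)).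
       { replace ((yr + E) * (yr + E) * ((L + r) * (L + r)) * (yr * yr)) with
           (((yr + E) * (yr + E)) * ((L + r) * (L + r) * (yr * yr))) by ring.
         apply Rmult_le_compat; try lra. nra. nra. }
       assert (A4 : (yr * yr + 3 * E * yr) * (L * L * (yr * yr) + 3 * L * L * E * yr) <= (yr * yr) * (L * L) * (yr * yr) * (1 + 15 * E / yr)).
       { replace (1 + 15 * E / yr) with ((yr + 15 * E) / yr) by (field; repeat split; apply Rgt_not_eq; unfold yp in *; lra).
         apply (Rmult_le_reg_r yr); auto.
         replace (yr * yr * (L * L) * (yr * yr) * ((yr + 15 * E) / yr) * yr) with (yr * yr * (L * L) * (yr * yr) * (yr + 15 * E)) by (field; repeat split; apply Rgt_not_eq; unfold yp in *; lra).
         replace ((yr * yr + 3 * E * yr) * (L * L * (yr * yr) + 3 * L * L * E * yr) * yr) with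
           ((L * L * (yr * yr * yr)) * ((yr + 3 * E) * (yr + 3 * E))) by ring.
         replace (yr * yr * (L * L) * (yr * yr) * (yr + 15 * E)) with
           ((L * L * (yr * yr * yr)) * (yr * (yr + 15 * E))) by ring.
         apply Rmult_le_compat_l. assert (0 <= yr * yr * yr) by (repeat apply Rmult_le_pos; lra). nra.
         assert (E * E <= E * yr) by (apply Rmult_le_compat_l; lra). nra. }
       assert (A5 : (L + beta) * (1 + 15 * E / yr) <= L + 1).
       { assert (15 * E / yr * L <= (1 - beta) / 4).
         { apply (Rmult_le_reg_r yr); auto. replace (15 * E / yr * L * yr) with (15 * E * L) by (field; repeat split; apply Rgt_not_eq; unfold yp in *; lra). nra. }
         assert (0 <= E / yr) by (apply Rdiv_le_0_compat; lra).
         nra. }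
       apply (Rmult_le_reg_r (yr * yr)). nra.
       assert (0 <= L + beta) by lra.
       assert (B1 : (L + beta) * ((yr + E) * (yr + E)) * ((L + r) * (L + r)) * (yr * yr) <=
                    (L + beta) * ((yr * yr) * (L * L) * (yr * yr) * (1 + 15 * E / yr))).
       { replace ((L + beta) * ((yr + E) * (yr + E)) * ((L + r) * (L + r)) * (yr * yr)) with
           ((L + beta) * ((yr + E) * (yr + E) * ((L + r) * (L + r)) * (yr * yr))) by ring.
         apply Rmult_le_compat_l; auto. lra. }
       assert (B2 : (L + beta) * ((yr * yr) * (L * L) * (yr * yr) * (1 + 15 * E / yr)) <=
                    (L + 1) * ((yr * yr) * (L * L) * (yr * yr))).
       { replace ((L + beta) * ((yr * yr) * (L * L) * (yr * yr) * (1 + 15 * E / yr))) with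
           ((L + beta) * (1 + 15 * E / yr) * ((yr * yr) * (L * L) * (yr * yr))) by ring.
         apply Rmult_le_compat_r; [|auto]. assert (0 <= yr * yr * (L * L)) by nra. nra. }
       assert ((L + r + 1) * (yr * yr) * (L * L) * (yr * yr) >= (L + 1) * (yr * yr * (L * L) * (yr * yr))).
       { assert (0 <= r * (yr * yr * (L * L) * (yr * yr))) by (apply Rmult_le_pos; nra). nra. }
       lra. }
     pose proof (Hg y Sy HyNg) as Hgy. unfold Rpower in Hgy. fold yr L v in Hgy.
     assert (Hpow : exp (c * L) = exp (s * L) * (yr * yr)).
     { unfold s. replace (c * L) with ((c - 2) * L + L + L) by ring. rewrite !exp_plus. unfold L; rewrite exp_ln by auto. ring. }
     assert (Hsl : s * s / 4 * (L * L) <= exp (s * L)).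
     { pose proof (exp_ineq1_le (s * L / 2)).
       assert (exp (s * L / 2) * exp (s * L / 2) = exp (s * L)) by (rewrite <- exp_plus; f_equal; field).
       assert (0 <= s * L / 2) by nra. nra. }
     assert (Hvb : s * s / 4 * (L * L) * (yr * yr) <= C * v) by nra.
     assert (HD0 : 0 < yr * yr * (L * L)) by (repeat apply Rmult_lt_0_compat; lra).
     assert (HyL : yr * L <> 0) by (apply Rgt_not_eq; apply Rmult_lt_0_compat; lra).
     assert (Hstep1 : / (yr * L) * m <= v * (L + b) / (yr * yr * (L * L))).
     { apply (Rmult_le_reg_r (yr * yr * (L * L))); auto.
       replace (/ (yr * L) * m * (yr * yr * (L * L))) with (m * yr * L) by (field; repeat split; apply Rgt_not_eq; unfold yp in *; lra).
       replace (v * (L + b) / (yr * yr * (L * L)) * (yr * yr * (L * L))) with (v * (L + b)) by (field; repeat split; apply Rgt_not_eq; unfold yp in *; lra). nra. }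
     assert (Hstep2 : (L + beta) / (yr * yr * (L * L)) <= (Lp + 1) / (yp * yp * (Lp * Lp))).
     { assert (0 < yp * yp * (Lp * Lp)) by (repeat apply Rmult_lt_0_compat; unfold yp in *; lra).
       apply (Rmult_le_reg_r (yr * yr * (L * L))); auto. apply (Rmult_le_reg_r (yp * yp * (Lp * Lp))); auto.
       replace ((L + beta) / (yr * yr * (L * L)) * (yr * yr * (L * L)) * (yp * yp * (Lp * Lp))) with
         ((L + beta) * (yp * yp) * (Lp * Lp)) by (field; repeat split; apply Rgt_not_eq; unfold yp in *; lra).
       replace ((Lp + 1) / (yp * yp * (Lp * Lp)) * (yr * yr * (L * L)) * (yp * yp * (Lp * Lp))) with
         ((Lp + 1) * (yr * yr) * (L * L)) by (field; repeat split; apply Rgt_not_eq; unfold yp in *; lra). auto. }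
     unfold K. replace (- (Lp + 1) / (yp * yp * (Lp * Lp)) * v) with (- (v * ((Lp + 1) / (yp * yp * (Lp * Lp))))) by (field; repeat split; apply Rgt_not_eq; unfold yp in *; lra).
     assert (v * ((L + beta) / (yr * yr * (L * L))) <= v * ((Lp + 1) / (yp * yp * (Lp * Lp)))) by (apply Rmult_le_compat_l; lra).
     assert (Hfin : v * (L + b) / (yr * yr * (L * L)) - v * ((L + beta) / (yr * yr * (L * L))) =
       - ((1 - b) / 2) * (v / (yr * yr * (L * L)))) by (unfold beta; field; lra).
     assert (Hq : s * s / (4 * C) <= v / (yr * yr * (L * L))).
     { apply (Rmult_le_reg_r (4 * C * (yr * yr * (L * L)))). nra.
       replace (s * s / (4 * C) * (4 * C * (yr * yr * (L * L)))) with (s * s * (yr * yr * (L * L))) by (field; repeat split; apply Rgt_not_eq; unfold yp in *; lra).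
       replace (v / (yr * yr * (L * L)) * (4 * C * (yr * yr * (L * L)))) with (4 * C * v) by (field; repeat split; apply Rgt_not_eq; unfold yp in *; lra). nra. }
     assert (- ((1 - b) / 2) * (v / (yr * yr * (L * L))) <= - ((1 - b) / 2) * (s * s / (4 * C))).
     { apply Rmult_le_compat_neg_l; lra. }
     replace ((1 - b) * s ^ 2 / (8 * C)) with ((1 - b) / 2 * (s * s / (4 * C))) by (field; repeat split; apply Rgt_not_eq; unfold yp in *; lra).
     lra. Qed.

Theorem mainTheorem10 (S : Z -> Prop) (lam : Z -> Z -> R) (Gam : list Z)
  (* S is an infinite subset of Z_{>=0} *)
  (hS_nonneg : forall x, S x -> (0 <= x)%Z)
  (hS_inf : forall N : Z, exists x, S x /\ (N < x)%Z)
  (* (a) finitely many jump sizes *)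
  (hGam_nodup : NoDup Gam)
  (hGam : forall eta x, S x -> ~ In eta Gam -> lam eta x = 0)
  (* (b) rates are nonnegative (and finite, being reals) *)
  (hlam_nonneg : forall eta x, S x -> 0 <= lam eta x)
  (* no jumps out of S *)
  (hlam_out : forall eta x, S x -> ~ S (x + eta)%Z -> lam eta x = 0)
  (* v positive on S *)
  (hv_pos : forall x, S x -> 0 < vdiff Gam lam x)
  (* irreducibility *)
  (hirr : irreducible S lam) :
  ((exists c : R, c <= 2 /\
      gtrsim S (vdiff Gam lam) (fun x => Rpower (IZR x) c) /\
      limsup_lt S (Jfun Gam lam) (c - 1)) \/
   (exists c : R, 2 < c /\
      gtrsim S (vdiff Gam lam) (fun x => Rpower (IZR x) c) /\
      limsup_lt S (H1fun Gam lam) 1)) ->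
  positive_recurrent S Gam lam.
Proof.
  assert (H : hyps S lam Gam) by (constructor; auto).
  intros [[c [Hc [[C [HC [Ng HNg]]] [b [Hb [Nl HNl]]]]]] | [c [Hc [[C [HC [Ng HNg]]] [b [Hb [Nl HNl]]]]]]].
  - destruct (Rlt_le_dec c 2) as [Hc2|Hc2].
    + apply (power_case S lam Gam H c C Ng b Nl); auto.
    + assert (c = 2) by lra. subst c.
      apply (power_case S lam Gam H ((b + 3) / 2) C (Z.max Ng 1) b Nl); auto; try lra.
      intros y Sy Hy. eapply Rle_trans; [|apply HNg; auto; lia].
      apply Rle_Rpower; [|lra]. apply IZR_le in Hy. pose proof (IZR_le 1 (Z.max Ng 1) ltac:(lia)). lra.
  - apply (lnln_case S lam Gam H c C Ng b Nl); auto.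
Qed.
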